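(* Let $\alpha\ge1$ and let $m_0\in W^{1,\infty}(0,\infty)$ be nonnegative, non-decreasing, with $m_0(0)=0$. For $h>0$ let $h_\rho=h$ and $h_t=\dfrac{h}{2\alpha\|(m_0)_\rho\|_\infty^{\alpha-1}\|m_0\|_\infty}$, let $M_j^n$ be given by scheme (M), and let $m^h$ be the continuous piecewise-linear interpolant of the values $M_j^n$ at the nodes $(t_n,\rho_j)=(nh_t,jh_\rho)$ on the triangulation of each cell $[t_n,t_{n+1}]\times[\rho_j,\rho_{j+1}]$ into two triangles along a diagonal. Then the family $\{m^h\}$ is uniformly Lipschitz continuous, and for every $T,P>0$, $m^h\to m$ uniformly on $[0,T]\times[0,P]$ as $h\to0$, where $m$ is the viscosity solution of the mass problem with datum $m_0$. Moreover $\|m(t,\cdot)\|_\infty=\lim_{\rho\to\infty}m(t,\rho)=\|m_0\|_\infty$ and $\|m_\rho(t,\cdot)\|_\infty\le\|(m_0)_\rho\|_\infty$ for all $t\ge0$.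
   Context: Scheme (M): with $H(s)=\big(\min\{s_+,\|(m_0)_\rho\|_\infty\}\big)^\alpha$, $M_j^0=m_0(\rho_j)$ ($j\ge0$), $M_0^n=0$ ($n>0$), $M_j^{n+1}=M_j^n\big/\big(1+h_tH\big(\frac{M_j^n-M_{j-1}^n}{h_\rho}\big)\big)$ for $j\ge1$, $n\ge0$. The mass problem is $m_t+(m_\rho)_+^\alpha m=0$ ($t,\rho>0$), $m(t,0)=0$, $m(0,\cdot)=m_0$; with Fréchet super/subdifferentials $D^\pm$, a continuous $m$ is a viscosity subsolution if $p_1+(p_2)_+^\alpha m\le0$ for all $(p_1,p_2)\in D^+m(t,\rho)$, $m(0,\cdot)\le m_0$, $m(t,0)\le0$; a supersolution with reversed inequalities and $D^-$; a viscosity solution if both (it is unique among bounded uniformly continuous functions). *)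

(* Defs.v *)
From Stdlib Require Import Reals Lra ZArith.
Open Scope R_scope.

(* real power with the convention 0^a = 0 (used only for a >= 1, or for a
   strictly positive base); Stdlib's Rpower gives Rpower 0 a = 1. *)
Definition rpow (x a : R) : R := if Rle_dec x 0 then 0 else Rpower x a.

(* H(s) = (min{s_+, L})^alpha, L = ||(m0)_rho||_oo *)
Definition Hfun (alpha Lm s : R) : R := rpow (Rmin (Rmax s 0) Lm) alpha.

Definition ht_of (alpha Lm Sm h : R) : R := h / (2 * alpha * rpow Lm (alpha - 1) * Sm).

(* Scheme (M): Mgrid ... n j = M_j^n *)
Fixpoint Mgrid (m0 : R -> R) (alpha Lm Sm h : R) (n : nat) {struct n} : nat -> R :=
  match n with
  | O => fun j => m0 (INR j * h)
  | S n' => fun j =>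
      match j with
      | O => 0
      | S j' =>
          Mgrid m0 alpha Lm Sm h n' (S j') /
          (1 + ht_of alpha Lm Sm h *
               Hfun alpha Lm ((Mgrid m0 alpha Lm Sm h n' (S j') - Mgrid m0 alpha Lm Sm h n' j') / h))
      end
  end.

(* Continuous piecewise-linear interpolant on [0,oo)^2.  Each cell
   [t_n,t_{n+1}] x [rho_j,rho_{j+1}] is split into two triangles along the
   diagonal (t_n,rho_j)-(t_{n+1},rho_{j+1}) if diag = true, and along the
   diagonal (t_{n+1},rho_j)-(t_n,rho_{j+1}) if diag = false. *)
Definition mh (m0 : R -> R) (alpha Lm Sm : R) (diag : bool) (h t rho : R) : R :=
  let ht := ht_of alpha Lm Sm h in
  let n := Z.to_nat (Int_part (t / ht)) in
  let j := Z.to_nat (Int_part (rho / h)) in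
  let s := t / ht - INR n in
  let r := rho / h - INR j in
  let M := Mgrid m0 alpha Lm Sm h in
  let a := M n j in
  let b := M (S n) j in
  let c := M n (S j) in
  let d := M (S n) (S j) in
  if diag then
    (if Rle_dec r s then a + s * (b - a) + r * (d - b)
     else a + r * (c - a) + s * (d - c))
  else
    (if Rle_dec (s + r) 1 then a + s * (b - a) + r * (c - a)
     else d + (1 - s) * (c - d) + (1 - r) * (b - d)).

Definition superdiff (m : R -> R -> R) (t rho p1 p2 : R) : Prop :=
  forall eps, 0 < eps -> exists delta, 0 < delta /\
    forall s y, 0 < s -> 0 < y ->
      sqrt ((s - t)^2 + (y - rho)^2) < delta ->
      m s y - m t rho - p1 * (s - t) - p2 * (y - rho)
        <= eps * sqrt ((s - t)^2 + (y - rho)^2).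

Definition subdiff (m : R -> R -> R) (t rho p1 p2 : R) : Prop :=
  forall eps, 0 < eps -> exists delta, 0 < delta /\
    forall s y, 0 < s -> 0 < y ->
      sqrt ((s - t)^2 + (y - rho)^2) < delta ->
      m s y - m t rho - p1 * (s - t) - p2 * (y - rho)
        >= - eps * sqrt ((s - t)^2 + (y - rho)^2).

Definition cont_quadrant (m : R -> R -> R) : Prop :=
  forall t rho, 0 <= t -> 0 <= rho -> forall eps, 0 < eps ->
    exists delta, 0 < delta /\ forall s y, 0 <= s -> 0 <= y ->
      Rabs (s - t) < delta -> Rabs (y - rho) < delta ->
      Rabs (m s y - m t rho) < eps.

Definition visc_sub (alpha : R) (m0 : R -> R) (m : R -> R -> R) : Prop :=
  cont_quadrant m /\
  (forall t rho p1 p2, 0 < t -> 0 < rho -> superdiff m t rho p1 p2 ->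
      p1 + rpow (Rmax p2 0) alpha * m t rho <= 0) /\
  (forall rho, 0 <= rho -> m 0 rho <= m0 rho) /\
  (forall t, 0 <= t -> m t 0 <= 0).

Definition visc_super (alpha : R) (m0 : R -> R) (m : R -> R -> R) : Prop :=
  cont_quadrant m /\
  (forall t rho p1 p2, 0 < t -> 0 < rho -> subdiff m t rho p1 p2 ->
      p1 + rpow (Rmax p2 0) alpha * m t rho >= 0) /\
  (forall rho, 0 <= rho -> m 0 rho >= m0 rho) /\
  (forall t, 0 <= t -> m t 0 >= 0).

Definition visc_sol (alpha : R) (m0 : R -> R) (m : R -> R -> R) : Prop :=
  visc_sub alpha m0 m /\ visc_super alpha m0 m.

Definition bounded_quadrant (m : R -> R -> R) : Prop :=
  exists B, forall t rho, 0 <= t -> 0 <= rho -> Rabs (m t rho) <= B.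

Definition unif_cont_quadrant (m : R -> R -> R) : Prop :=
  forall eps, 0 < eps -> exists delta, 0 < delta /\
    forall t rho s y, 0 <= t -> 0 <= rho -> 0 <= s -> 0 <= y ->
      Rabs (s - t) < delta -> Rabs (y - rho) < delta ->
      Rabs (m s y - m t rho) < eps.

(* Main.v *)
Require Import Defs.
From Stdlib Require Import Reals Lra ZArith.
Open Scope R_scope.
From Stdlib Require Import Lia ClassicalEpsilon.

Lemma rpow_pos_eq x a : 0 < x -> rpow x a = Rpower x a.
Proof. intros; unfold rpow; destruct (Rle_dec x 0); lra. Qed.

Lemma rpow_nonpos x a : x <= 0 -> rpow x a = 0.
Proof. intros; unfold rpow; destruct (Rle_dec x 0); lra. Qed.

Lemma Rpower_pos x a : 0 < Rpower x a.
Proof. unfold Rpower; apply exp_pos. Qed.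

Lemma rpow_nonneg x a : 0 <= rpow x a.
Proof. unfold rpow; destruct (Rle_dec x 0); [lra|]. left; apply Rpower_pos. Qed.

Section Hlip.
Variables (alpha L : R).
Hypothesis Ha : 1 <= alpha.
Hypothesis HL : 0 < L.

Lemma rpow_lip x y : 0 <= x -> x <= y -> y <= L ->
  0 <= rpow y alpha - rpow x alpha <= alpha * Rpower L (alpha - 1) * (y - x).
Proof.
  intros Hx Hxy HyL.
  assert (HLp : 0 < Rpower L (alpha - 1)) by apply Rpower_pos.
  destruct (Req_dec x y) as [E|Nxy].
  { subst; split; nra. }
  destruct (Req_dec x 0) as [Ex|Nx].
  - subst x. assert (0 < y) by (destruct Hxy; [lra| congruence]). rewrite (rpow_nonpos 0) by lra. rewrite rpow_pos_eq by lra.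
    replace (Rpower y alpha) with (y * Rpower y (alpha - 1)).
    2:{ replace alpha with (1 + (alpha - 1)) at 2 by ring.
        rewrite Rpower_plus, Rpower_1 by lra. ring. }
    assert (Rpower y (alpha - 1) <= Rpower L (alpha - 1)).
    { apply Rle_Rpower_l; lra. }
    pose proof (Rpower_pos y (alpha - 1)). split; [nra|]. assert (y <= alpha * y) by nra. nra.
  - rewrite !rpow_pos_eq by lra.
    destruct (MVT_cor2 (fun z => Rpower z alpha) (fun z => alpha * Rpower z (alpha - 1)) x y)
      as [c [Hc1 Hc2]]; [lra| |].
    { intros c Hc. apply derivable_pt_lim_power. lra. }
    simpl in Hc1. rewrite Hc1.
    assert (Rpower c (alpha - 1) <= Rpower L (alpha - 1)).
    { apply Rle_Rpower_l; lra. }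
    pose proof (Rpower_pos c (alpha - 1)). assert (x < y) by (destruct Hxy; [lra|congruence]). split; [apply Rmult_le_pos; [apply Rmult_le_pos|]; lra | apply Rmult_le_compat_r; [lra|]; apply Rmult_le_compat_l; lra].
Qed.

Definition clamp s := Rmin (Rmax s 0) L.

Lemma clamp_range s : 0 <= clamp s <= L.
Proof. unfold clamp, Rmin, Rmax; repeat destruct Rle_dec; lra. Qed.

Lemma clamp_mono s s' : s <= s' -> 0 <= clamp s' - clamp s <= s' - s.
Proof. intros; unfold clamp, Rmin, Rmax; repeat destruct Rle_dec; lra. Qed.

Lemma Hfun_lip s s' : s <= s' ->
  0 <= Hfun alpha L s' - Hfun alpha L s <= alpha * Rpower L (alpha - 1) * (s' - s).
Proof.
  intros Hs. unfold Hfun. fold (clamp s) (clamp s').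
  pose proof (clamp_range s); pose proof (clamp_range s'); pose proof (clamp_mono s s' Hs).
  pose proof (rpow_lip (clamp s) (clamp s')).
  assert (0 < alpha * Rpower L (alpha - 1)) by (pose proof (Rpower_pos L (alpha-1)); nra).
  split; [apply H2; lra|]. destruct H2 as [_ H2]; try lra. nra.
Qed.

Lemma Hfun_nonneg s : 0 <= Hfun alpha L s.
Proof. apply rpow_nonneg. Qed.

Lemma Hfun_le s : Hfun alpha L s <= Rpower L alpha.
Proof.
  pose proof (Hfun_lip s (Rmax s L)).
  unfold Hfun in *. 
  assert (Rmin (Rmax (Rmax s L) 0) L = L) by (unfold Rmin, Rmax; repeat destruct Rle_dec; lra).
  rewrite H0 in H. rewrite (rpow_pos_eq L) in H by lra.
  assert (s <= Rmax s L) by (unfold Rmax; destruct Rle_dec; lra). lra.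
Qed.

Lemma Hfun_eq s : s <= L -> Hfun alpha L s = rpow (Rmax s 0) alpha.
Proof.
  intros; unfold Hfun; f_equal; unfold Rmin, Rmax; repeat destruct Rle_dec; lra.
Qed.
End Hlip.


Definition fl (r : R) : nat := Z.to_nat (Int_part r).

Lemma fl_spec r : 0 <= r -> INR (fl r) <= r < INR (fl r) + 1.
Proof.
  intros Hr. unfold fl. destruct (base_Int_part r) as [H1 H2].
  assert (Hz : (0 <= Int_part r)%Z).
  { assert (-1 < IZR (Int_part r)) by lra. apply lt_IZR in H. lia. }
  rewrite INR_IZR_INZ, Z2Nat.id by auto. lra.
Qed.

Lemma fl_unique r n : INR n <= r < INR n + 1 -> fl r = n.
Proof.
  intros [H1 H2]. unfold fl. rewrite <- (Int_part_spec r (Z.of_nat n)).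
  - apply Nat2Z.id.
  - rewrite <- INR_IZR_INZ. lra.
Qed.

Lemma fl_INR n : fl (INR n) = n.
Proof. apply fl_unique. lra. Qed.

Lemma pw2 (f : R -> R) q a1 b1 a2 b2 B :
  (forall s, s <= q -> f s = a2 + b2 * s) ->
  (forall s, q <= s -> f s = a1 + b1 * s) ->
  Rabs b1 <= B -> Rabs b2 <= B ->
  forall s s', Rabs (f s - f s') <= B * Rabs (s - s').
Proof.
  intros H2 H1 Hb1 Hb2.
  assert (Hq : a1 + b1 * q = a2 + b2 * q) by (rewrite <- H1, <- H2; lra).
  assert (key : forall s s', s <= s' -> Rabs (f s - f s') <= B * Rabs (s - s')).
  { intros s s' Hss.
    rewrite (Rabs_minus_sym s), (Rabs_right (s' - s)) by lra.
    assert (0 <= B) by (pose proof (Rabs_pos b1); lra).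
    destruct (Rle_lt_dec s' q).
    - rewrite !H2 by lra. replace (a2 + b2 * s - (a2 + b2 * s')) with (- b2 * (s' - s)) by ring.
      rewrite Rabs_mult, Rabs_Ropp, (Rabs_right (s'-s)) by lra. apply Rmult_le_compat_r; lra.
    - destruct (Rle_lt_dec q s).
      + rewrite !H1 by lra. replace (a1 + b1 * s - (a1 + b1 * s')) with (- b1 * (s' - s)) by ring.
        rewrite Rabs_mult, Rabs_Ropp, (Rabs_right (s'-s)) by lra. apply Rmult_le_compat_r; lra.
      + rewrite (H2 s), (H1 s') by lra.
        replace (a2 + b2 * s - (a1 + b1 * s')) with (b2 * (s - q) - b1 * (s' - q)) by lra.
        eapply Rle_trans; [apply Rabs_triang_inv2 || apply Rabs_triang|].
        rewrite Rabs_Ropp, !Rabs_mult, (Rabs_left1 (s - q)), (Rabs_right (s' - q)) by lra.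
        assert (Rabs b2 * - (s - q) <= B * - (s - q)) by (apply Rmult_le_compat_r; lra).
        assert (Rabs b1 * (s' - q) <= B * (s' - q)) by (apply Rmult_le_compat_r; lra).
        lra. }
  intros s s'. destruct (Rle_lt_dec s s'); [apply key; lra|].
  rewrite Rabs_minus_sym, (Rabs_minus_sym s). apply key; lra.
Qed.

Section Glue.
Variables (tau K : R) (g : nat -> R -> R).
Hypothesis Htau : 0 < tau.
Hypothesis HK : 0 <= K.
Hypothesis HA : forall n s s', 0 <= s <= 1 -> 0 <= s' <= 1 -> Rabs (g n s - g n s') <= K * tau * Rabs (s - s').
Hypothesis HB : forall n, g n 1 = g (S n) 0.

Definition Fg t := g (fl (t / tau)) (t / tau - INR (fl (t / tau))).

Lemma Fg_cell n t : INR n * tau <= t <= INR (S n) * tau -> Fg t = g n (t / tau - INR n).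
Proof.
  intros [H1 H2]. rewrite S_INR in H2. unfold Fg.
  assert (E1 : INR n <= t / tau) by (apply Rmult_le_reg_r with tau; auto; unfold Rdiv; rewrite Rmult_assoc, Rinv_l, Rmult_1_r; lra).
  assert (E2 : t / tau <= INR n + 1) by (apply Rmult_le_reg_r with tau; auto; unfold Rdiv; rewrite Rmult_assoc, Rinv_l, Rmult_1_r; lra).
  destruct (Rlt_dec (t / tau) (INR n + 1)).
  - rewrite (fl_unique (t/tau) n) by lra. auto.
  - assert (t / tau = INR (S n)) by (rewrite S_INR; lra). rewrite H, fl_INR.
    rewrite Rminus_diag, <- HB, S_INR. f_equal. ring.
Qed.

Lemma Fg_same_cell n t t' : INR n * tau <= t <= INR (S n) * tau ->
  INR n * tau <= t' <= INR (S n) * tau -> Rabs (Fg t - Fg t') <= K * Rabs (t - t').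
Proof.
  intros H1 H2. rewrite (Fg_cell n t H1), (Fg_cell n t' H2). rewrite S_INR in H1, H2.
  assert (R1 : forall u, INR n * tau <= u <= (INR n + 1) * tau -> 0 <= u / tau - INR n <= 1).
  { intros u Hu. 
    assert (INR n <= u / tau <= INR n + 1); [|lra].
    split; apply Rmult_le_reg_r with tau; auto; unfold Rdiv; rewrite Rmult_assoc, Rinv_l, Rmult_1_r; lra. }
  eapply Rle_trans; [apply HA; apply R1; lra|].
  replace (t / tau - INR n - (t' / tau - INR n)) with ((t - t') / tau) by (field; lra).
  unfold Rdiv. rewrite Rabs_mult, (Rabs_right (/ tau)) by (left; apply Rinv_0_lt_compat; auto).
  right. field. lra.
Qed.

Lemma divt_nonneg t : 0 <= t -> 0 <= t / tau.
Proof. intros; apply Rmult_le_pos; [lra|left; apply Rinv_0_lt_compat; auto]. Qed.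

Lemma fl_cell t : 0 <= t -> INR (fl (t/tau)) * tau <= t <= INR (S (fl (t/tau))) * tau.
Proof.
  intros Ht. pose proof (fl_spec _ (divt_nonneg t Ht)) as [S1 S2]. rewrite S_INR.
  split; apply Rmult_le_reg_r with (/ tau); try (apply Rinv_0_lt_compat; auto);
  rewrite Rmult_assoc, Rinv_r, Rmult_1_r by lra; fold (t / tau); lra.
Qed.

Lemma Fg_lip_aux d : forall t t', 0 <= t -> t <= t' -> fl (t' / tau) = (fl (t / tau) + d)%nat ->
  Rabs (Fg t - Fg t') <= K * Rabs (t - t').
Proof.
  induction d; intros t t' Ht Htt' Hfl.
  - rewrite Nat.add_0_r in Hfl. apply (Fg_same_cell (fl (t/tau))).
    + apply fl_cell; auto.
    + rewrite <- Hfl. apply fl_cell; lra.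
  - set (n := fl (t/tau)) in *.
    set (p := INR (S n) * tau).
    assert (Hp1 : t <= p) by (apply fl_cell; auto).
    assert (Hp2 : p <= t').
    { pose proof (fl_cell t' ltac:(lra)) as [C1 C2]. rewrite Hfl in C1.
      unfold p. eapply Rle_trans; [|apply C1]. apply Rmult_le_compat_r; [lra|].
      apply le_INR. lia. }
    assert (Hpfl : fl (p / tau) = S n) by (unfold p; unfold Rdiv; rewrite Rmult_assoc, Rinv_r, Rmult_1_r by lra; apply fl_INR).
    assert (A1 : Rabs (Fg t - Fg p) <= K * Rabs (t - p)).
    { apply (Fg_same_cell n); [apply fl_cell; auto|]. unfold p; split; [|lra].
      apply Rmult_le_compat_r; [lra|]. apply le_INR; lia. }
    assert (A2 : Rabs (Fg p - Fg t') <= K * Rabs (p - t')).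
    { apply IHd; [lra|lra|]. rewrite Hpfl, Hfl. lia. }
    replace (Fg t - Fg t') with ((Fg t - Fg p) + (Fg p - Fg t')) by ring.
    eapply Rle_trans; [apply Rabs_triang|].
    rewrite (Rabs_left1 (t - t')), (Rabs_left1 (t - p)), (Rabs_left1 (p - t')) in * by lra.
    lra.
Qed.

Lemma Fg_lip t t' : 0 <= t -> 0 <= t' -> Rabs (Fg t - Fg t') <= K * Rabs (t - t').
Proof.
  intros Ht Ht'.
  assert (key : forall t t', 0 <= t -> t <= t' -> Rabs (Fg t - Fg t') <= K * Rabs (t - t')).
  { intros u u' Hu Huu'. apply (Fg_lip_aux (fl (u'/tau) - fl (u/tau))); auto.
    assert (fl (u / tau) <= fl (u' / tau))%nat.
    { pose proof (fl_cell u Hu) as [C1 C2]. pose proof (fl_cell u' ltac:(lra)) as [C3 C4].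
      destruct (le_lt_dec (fl (u / tau)) (fl (u' / tau))); auto.
      exfalso. assert (INR (S (fl (u'/tau))) <= INR (fl (u/tau))) by (apply le_INR; lia).
      assert (INR (S (fl (u'/tau))) * tau <= INR (fl (u/tau)) * tau) by (apply Rmult_le_compat_r; lra).
      assert (u' = u) by lra. subst u'. lia. }
    lia. }
  destruct (Rle_lt_dec t t'); [apply key; auto|].
  rewrite Rabs_minus_sym, (Rabs_minus_sym t). apply key; lra.
Qed.
End Glue.

From Stdlib Require Import List.
Import ListNotations.

Lemma finmax {A : Type} (l : list A) (g : A -> R) : l <> [] ->
  exists x, In x l /\ forall y, In y l -> g y <= g x.
Proof.
  induction l as [|a l IH]; intros Hne; [congruence|].
  destruct l as [|b l'].
  - exists a. split; [left; auto|]. intros y [->|[]]; lra.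
  - destruct IH as [x [Hx Hm]]; [congruence|].
    destruct (Rle_dec (g a) (g x)).
    + exists x. split; [right; auto|]. intros y [->|Hy]; auto.
    + exists a. split; [left; auto|]. intros y [->|Hy]; [lra|]. specialize (Hm y Hy). lra.
Qed.

Lemma finmax4 (g : nat -> nat -> nat -> nat -> R) N J N' J' :
  exists n j n' j', (n <= N)%nat /\ (j <= J)%nat /\ (n' <= N')%nat /\ (j' <= J')%nat /\
    forall a b c d, (a <= N)%nat -> (b <= J)%nat -> (c <= N')%nat -> (d <= J')%nat ->
      g a b c d <= g n j n' j'.
Proof.
  set (l := list_prod (list_prod (list_prod (seq 0 (S N)) (seq 0 (S J))) (seq 0 (S N'))) (seq 0 (S J'))).
  destruct (finmax l (fun q => match q with (((a,b),c),d) => g a b c d end)) as [[[[n j] n'] j'] [Hin Hm]].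
  - unfold l. destruct (list_prod _ _) eqn:E; [|congruence].
    assert (In (((0,0),0),0)%nat (@nil (nat*nat*nat*nat))); [|contradiction].
    rewrite <- E. repeat (apply in_prod; try (apply in_seq; lia)).
  - unfold l in Hin. repeat rewrite in_prod_iff in Hin. rewrite !in_seq in Hin.
    exists n, j, n', j'. repeat split; try lia.
    intros a b c d Ha Hb Hc Hd. apply (Hm (((a,b),c),d)).
    unfold l. repeat (apply in_prod; try (apply in_seq; lia)).
Qed.


Section Main.
Variables (alpha : R) (m0 : R -> R) (Lm Sm : R) (diag : bool).
Hypothesis Ha : 1 <= alpha.
Hypothesis Hm0pos : forall x, 0 <= x -> 0 <= m0 x.
Hypothesis Hm0mono : forall x y, 0 <= x -> x <= y -> m0 x <= m0 y.
Hypothesis Hm00 : m0 0 = 0.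
Hypothesis HS : is_lub (fun v => exists x, 0 <= x /\ v = Rabs (m0 x)) Sm.
Hypothesis HL : is_lub (fun q => exists x y, 0 <= x /\ x < y /\ q = Rabs (m0 y - m0 x) / (y - x)) Lm.
Hypothesis HSpos : 0 < Sm.

Lemma m0_le_S x : 0 <= x -> m0 x <= Sm.
Proof.
  intros Hx. destruct HS as [H1 _].
  assert (Rabs (m0 x) <= Sm) by (apply H1; exists x; auto).
  rewrite Rabs_right in H by (apply Rle_ge, Hm0pos; auto). auto.
Qed.

Lemma m0_lip x y : 0 <= x -> x <= y -> m0 y - m0 x <= Lm * (y - x).
Proof.
  intros Hx Hxy. destruct (Req_dec x y) as [E|N]; [subst; lra|].
  destruct HL as [H1 _].
  assert (Hq : Rabs (m0 y - m0 x) / (y - x) <= Lm) by (apply H1; exists x, y; repeat split; lra).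
  assert (0 <= m0 y - m0 x) by (pose proof (Hm0mono x y); lra).
  rewrite Rabs_right in Hq by lra.
  assert (0 < y - x) by lra.
  apply Rmult_le_reg_r with (/ (y - x)); [apply Rinv_0_lt_compat; lra|].
  replace (Lm * (y - x) * / (y - x)) with Lm by (field; lra). exact Hq.
Qed.

Lemma Lm_pos : 0 < Lm.
Proof.
  destruct (Rle_lt_dec Lm 0) as [HLe|]; [|auto].
  exfalso.
  assert (forall x, 0 <= x -> m0 x <= 0).
  { intros x Hx. destruct (Req_dec x 0); [subst; lra|].
    pose proof (m0_lip 0 x). nra. }
  destruct HS as [_ H2].
  assert (Sm <= 0); [|lra].
  apply H2. intros v [x [Hx ->]]. pose proof (H x Hx); pose proof (Hm0pos x Hx).
  rewrite Rabs_right; lra.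
Qed.

Lemma m0_to_S e : 0 < e -> exists X, 0 <= X /\ forall x, X <= x -> Sm - e < m0 x.
Proof.
  intros He. destruct HS as [H1 H2].
  destruct (Rlt_dec (Sm - e) (m0 0)) as [Hl|Hn].
  - exists 0. split; [lra|]. intros x Hx. pose proof (Hm0mono 0 x). lra.
  - assert (exists x, 0 <= x /\ Sm - e < m0 x).
    { apply Classical_Prop.NNPP; intro Hno.
      assert (Sm <= Sm - e); [|lra]. apply H2. intros v [x [Hx ->]].
      rewrite Rabs_right by (apply Rle_ge, Hm0pos; auto).
      apply Rnot_lt_le. intro; apply Hno; exists x; auto. }
    destruct H as [X [HX1 HX2]]. exists X; split; auto. intros x Hx.
    pose proof (Hm0mono X x). lra.
Qed.

Definition Lp := Rpower Lm (alpha - 1).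
Definition c0 := / (2 * alpha * Lp * Sm).
Definition HH := Hfun alpha Lm.
Definition MM h := Mgrid m0 alpha Lm Sm h.

Lemma Lp_pos : 0 < Lp. Proof. apply Rpower_pos. Qed.
Lemma c0_pos : 0 < c0.
Proof. unfold c0. pose proof Lp_pos. apply Rinv_0_lt_compat. repeat apply Rmult_lt_0_compat; lra. Qed.
Lemma c0_key : c0 * (alpha * Lp) * Sm = / 2.
Proof. unfold c0. pose proof Lp_pos. field. split; lra. Qed.

Lemma ht_eq h : ht_of alpha Lm Sm h = c0 * h.
Proof.
  unfold ht_of, c0. rewrite rpow_pos_eq by apply Lm_pos. fold Lp.
  pose proof Lp_pos. unfold Rdiv. ring.
Qed.

Lemma HH_lip s s' : s <= s' -> 0 <= HH s' - HH s <= alpha * Lp * (s' - s).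
Proof. intros; apply Hfun_lip; auto using Lm_pos. Qed.
Lemma HH_nonneg s : 0 <= HH s. Proof. apply Hfun_nonneg. Qed.
Definition LA := Rpower Lm alpha.
Lemma HH_le s : HH s <= LA. Proof. apply Hfun_le; auto using Lm_pos. Qed.

Lemma MM_0 h j : MM h 0 j = m0 (INR j * h).
Proof. reflexivity. Qed.
Lemma MM_S0 h n : MM h (S n) 0 = 0.
Proof. reflexivity. Qed.
Lemma MM_SS h n j : MM h (S n) (S j) =
  MM h n (S j) / (1 + c0 * h * HH ((MM h n (S j) - MM h n j) / h)).
Proof. unfold MM; simpl; rewrite ht_eq; reflexivity. Qed.

Definition Dn h a b := 1 + c0 * h * HH ((a - b) / h).
Lemma Dn_pos h a b : 0 < h -> 0 < Dn h a b.
Proof. intros; unfold Dn; pose proof c0_pos; pose proof (HH_nonneg ((a-b)/h)). assert (0 <= c0*h*HH ((a-b)/h)) by (repeat apply Rmult_le_pos; lra). lra. Qed.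

Lemma f_mono h a' a b' b : 0 < h -> 0 <= a' -> a' <= a -> a' <= Sm -> b' <= b ->
  a' / Dn h a' b' <= a / Dn h a b.
Proof.
  intros Hh H1 H2 H3 H4.
  pose proof (Dn_pos h a' b' Hh) as D1; pose proof (Dn_pos h a' b Hh) as D2;
  pose proof (Dn_pos h a b Hh) as D3.
  pose proof c0_pos as Hc0. pose proof c0_key as Hck. pose proof Lp_pos as HLp.
  assert (Hih : 0 < / h) by (apply Rinv_0_lt_compat; lra).
  apply Rle_trans with (a' / Dn h a' b).
  - assert (Dn h a' b <= Dn h a' b').
    { unfold Dn.
      assert (Hs : (a' - b)/h <= (a' - b')/h) by (unfold Rdiv; apply Rmult_le_compat_r; lra).
      pose proof (HH_lip _ _ Hs) as [G1 G2].
      assert (0 <= c0 * h) by (apply Rmult_le_pos; lra).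
      assert (c0 * h * HH ((a'-b)/h) <= c0 * h * HH ((a'-b')/h)) by (apply Rmult_le_compat_l; lra).
      lra. }
    unfold Rdiv. apply Rmult_le_compat_l; auto. apply Rinv_le_contravar; auto.
  - assert (Hs : (a' - b)/h <= (a - b)/h) by (unfold Rdiv; apply Rmult_le_compat_r; lra).
    pose proof (HH_lip _ _ Hs) as [G1 G2].
    assert (Hk : c0 * h * (alpha * Lp * ((a - b) / h - (a' - b) / h)) = c0 * (alpha * Lp) * (a - a')).
    { field; lra. }
    assert (Hm : a' * Dn h a b <= a * Dn h a' b).
    { unfold Dn.
      set (u := HH ((a - b)/h)) in *. set (v := HH ((a' - b)/h)) in *.
      assert (Hch : 0 <= c0 * h) by (apply Rmult_le_pos; lra).
      assert (E1 : c0 * h * (u - v) <= c0 * (alpha * Lp) * (a - a')) by (rewrite <- Hk; apply Rmult_le_compat_l; lra).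
      assert (E2 : a' * (c0 * h * (u - v)) <= a' * (c0 * (alpha * Lp) * (a - a'))) by (apply Rmult_le_compat_l; lra).
      assert (E3 : a' * (c0 * (alpha * Lp) * (a - a')) <= Sm * (c0 * (alpha * Lp) * (a - a'))).
      { apply Rmult_le_compat_r; [|lra]. apply Rmult_le_pos; [|lra]. apply Rmult_le_pos; [lra|]. apply Rmult_le_pos; lra. }
      assert (E4 : 0 <= c0 * h * v) by (apply Rmult_le_pos; [lra|]; apply HH_nonneg).
      assert (E5 : Sm * (c0 * (alpha * Lp) * (a - a')) = /2 * (a - a')) by (rewrite <- Hck; ring).
      assert (E6 : 0 <= (a - a') * (c0 * h * v)) by (apply Rmult_le_pos; lra).
      nra. }
    unfold Rdiv. apply Rmult_le_reg_r with (Dn h a' b * Dn h a b); [nra|].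
    replace (a' * / Dn h a' b * (Dn h a' b * Dn h a b)) with (a' * Dn h a b) by (field; lra).
    replace (a * / Dn h a b * (Dn h a' b * Dn h a b)) with (a * Dn h a' b) by (field; lra).
    auto.
Qed.


Lemma MM_step h n j : MM h (S n) (S j) = MM h n (S j) / Dn h (MM h n (S j)) (MM h n j).
Proof. rewrite MM_SS. reflexivity. Qed.

Lemma Dn_ge1 h a b : 0 < h -> 1 <= Dn h a b.
Proof. intros; unfold Dn. pose proof c0_pos. pose proof (HH_nonneg ((a-b)/h)).
  assert (0 <= c0*h*HH ((a-b)/h)) by (repeat apply Rmult_le_pos; lra). lra. Qed.

Lemma div_le_self a D : 0 <= a -> 1 <= D -> a / D <= a.
Proof.
  intros. unfold Rdiv. apply Rle_trans with (a * 1); [|lra].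
  apply Rmult_le_compat_l; [lra|]. rewrite <- Rinv_1. apply Rinv_le_contravar; lra.
Qed.

Lemma div_D_range h a b : 0 < h -> 0 <= a -> 0 <= a / Dn h a b <= a.
Proof.
  intros Hh Ha0. pose proof (Dn_ge1 h a b Hh).
  split. - apply Rmult_le_pos; [lra|]. left; apply Rinv_0_lt_compat; lra.
  - apply div_le_self; auto.
Qed.

Lemma MM_n0 h n : MM h n 0 = 0.
Proof. destruct n; [rewrite MM_0; simpl; rewrite Rmult_0_l; auto | apply MM_S0]. Qed.

Lemma MM_range h n j : 0 < h -> 0 <= MM h n j <= Sm.
Proof.
  intros Hh. revert j; induction n; intros j.
  - rewrite MM_0. assert (0 <= INR j * h) by (apply Rmult_le_pos; [apply pos_INR|lra]).
    split; [apply Hm0pos|apply m0_le_S]; auto.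
  - destruct j; [rewrite MM_S0; lra|]. rewrite MM_step.
    pose proof (IHn (S j)). pose proof (div_D_range h (MM h n (S j)) (MM h n j) Hh). lra.
Qed.

Lemma HH_0 : HH 0 = 0.
Proof. unfold HH, Hfun. apply rpow_nonpos. unfold Rmin, Rmax; repeat destruct Rle_dec; lra. Qed.

Lemma MM_time h n j : 0 < h -> 0 <= MM h n j - MM h (S n) j <= c0 * h * Sm * LA.
Proof.
  intros Hh. destruct j; [rewrite !MM_n0; pose proof c0_pos; pose proof (HH_le 0);
    pose proof (HH_nonneg 0); assert (0 <= c0*h*Sm*LA) by (repeat apply Rmult_le_pos; lra); lra|].
  rewrite MM_step. set (a := MM h n (S j)). set (D := Dn h a (MM h n j)).
  pose proof (MM_range h n (S j) Hh) as Ha0. fold a in Ha0.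
  assert (HD : D = 1 + c0 * h * HH ((a - MM h n j)/h)) by reflexivity.
  pose proof (Dn_ge1 h a (MM h n j) Hh). fold D in H.
  pose proof (HH_le ((a - MM h n j)/h)); pose proof (HH_nonneg ((a - MM h n j)/h)).
  pose proof c0_pos.
  assert (E : a - a / D = a * (c0 * h * HH ((a - MM h n j)/h)) / D) by (rewrite HD; field; lra).
  rewrite E. split.
  - apply Rmult_le_pos; [apply Rmult_le_pos; [lra|]; repeat apply Rmult_le_pos; lra|].
    left; apply Rinv_0_lt_compat; lra.
  - apply Rle_trans with (a * (c0 * h * HH ((a - MM h n j)/h))).
    + apply div_le_self; [|lra]. apply Rmult_le_pos; [lra|]; repeat apply Rmult_le_pos; lra.
    + assert (0 <= c0 * h) by (apply Rmult_le_pos; lra).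
      assert (c0 * h * HH ((a - MM h n j)/h) <= c0 * h * LA) by (apply Rmult_le_compat_l; lra).
      assert (0 <= c0 * h * HH ((a - MM h n j)/h)) by (apply Rmult_le_pos; lra).
      replace (c0 * h * Sm * LA) with (Sm * (c0 * h * LA)) by ring.
      apply Rmult_le_compat; lra.
Qed.

Lemma Dn_shift h a b c : Dn h (a + c) (b + c) = Dn h a b.
Proof. unfold Dn. replace (a + c - (b + c)) with (a - b) by ring. auto. Qed.

Lemma MM_space h n j : 0 < h -> 0 <= MM h n (S j) - MM h n j <= Lm * h.
Proof.
  intros Hh. revert j; induction n; intros j.
  - rewrite !MM_0. rewrite S_INR.
    assert (0 <= INR j * h) by (apply Rmult_le_pos; [apply pos_INR|lra]).
    pose proof (Hm0mono (INR j * h) ((INR j + 1) * h)).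
    pose proof (m0_lip (INR j * h) ((INR j + 1) * h)).
    replace ((INR j + 1) * h - INR j * h) with h in H1 by ring. split; [|lra].
    assert (INR j * h <= (INR j + 1) * h) by lra. specialize (H0 H H2). lra.
  - destruct j.
    + rewrite MM_S0. pose proof (MM_time h n 1 Hh). pose proof (IHn 0%nat). rewrite MM_n0 in H0.
      pose proof (MM_range h (S n) 1 Hh). lra.
    + rewrite !MM_step. pose proof (MM_range h n (S j) Hh). pose proof (MM_range h n j Hh).
      pose proof (IHn j). pose proof (IHn (S j)). split.
      * cut (MM h n (S j) / Dn h (MM h n (S j)) (MM h n j) <= MM h n (S (S j)) / Dn h (MM h n (S (S j))) (MM h n (S j))); [lra|]. apply f_mono; auto; lra.
      * set (a := MM h n (S (S j))) in *. set (b := MM h n (S j)) in *. set (b' := MM h n j) in *.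
        apply Rle_trans with ((b + Lm * h) / Dn h (b + Lm * h) (b' + Lm * h) - b / Dn h b b').
        { apply Rplus_le_compat_r. apply f_mono; auto; try lra.
          pose proof (MM_range h n (S (S j)) Hh). fold a in H3. lra. }
        rewrite Dn_shift. pose proof (Dn_ge1 h b b' Hh).
        assert (Hl : 0 <= Lm * h) by (pose proof Lm_pos; nra).
        replace ((b + Lm * h) / Dn h b b' - b / Dn h b b') with (Lm * h / Dn h b b') by (field; lra).
        apply div_le_self; lra.
Qed.

Lemma MM_le_lin h n j : 0 < h -> MM h n j <= Lm * (INR j * h).
Proof.
  intros Hh. induction j; [rewrite MM_n0; simpl; lra|].
  pose proof (MM_space h n j Hh). rewrite S_INR. lra.
Qed.

Lemma MM_diag h n j : 0 < h -> MM h n j <= MM h (S n) (S j).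
Proof.
  intros Hh. rewrite MM_step.
  pose proof (MM_range h n j Hh). pose proof (MM_space h n j Hh).
  assert (MM h n j = MM h n j / Dn h (MM h n j) (MM h n j)).
  { unfold Dn. rewrite Rminus_diag, Rdiv_0_l, HH_0. rewrite Rmult_0_r, Rplus_0_r. field. }
  rewrite H1 at 1. apply f_mono; lra.
Qed.

Lemma MM_lower h n j : 0 < h -> (n <= j)%nat -> m0 ((INR j - INR n) * h) <= MM h n j.
Proof.
  intros Hh. revert j; induction n; intros j Hj.
  - rewrite MM_0. simpl. rewrite Rminus_0_r. lra.
  - destruct j; [lia|]. pose proof (IHn j ltac:(lia)). pose proof (MM_diag h n j Hh).
    rewrite !S_INR. replace (INR j + 1 - (INR n + 1)) with (INR j - INR n) by ring. lra.
Qed.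

Lemma MM_time_tot h n j : 0 < h -> m0 (INR j * h) - INR n * (c0 * h * Sm * LA) <= MM h n j.
Proof.
  intros Hh. induction n; [rewrite MM_0; simpl; lra|].
  pose proof (MM_time h n j Hh). rewrite S_INR. lra.
Qed.

Lemma MM_le_m0 h n j : 0 < h -> MM h n j <= m0 (INR j * h).
Proof.
  intros Hh. induction n; [rewrite MM_0; lra|]. pose proof (MM_time h n j Hh). lra.
Qed.


Definition Gc h n j s r :=
  if diag then
    (if Rle_dec r s then MM h n j + s * (MM h (S n) j - MM h n j) + r * (MM h (S n) (S j) - MM h (S n) j)
     else MM h n j + r * (MM h n (S j) - MM h n j) + s * (MM h (S n) (S j) - MM h n (S j)))
  else
    (if Rle_dec (s + r) 1 then MM h n j + s * (MM h (S n) j - MM h n j) + r * (MM h n (S j) - MM h n j)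
     else MM h (S n) (S j) + (1 - s) * (MM h n (S j) - MM h (S n) (S j)) + (1 - r) * (MM h (S n) j - MM h (S n) (S j))).

Definition mhh h t rho := mh m0 alpha Lm Sm diag h t rho.

Lemma mh_eq h t rho : mhh h t rho =
  Gc h (fl (t / (c0 * h))) (fl (rho / h)) (t / (c0 * h) - INR (fl (t / (c0 * h)))) (rho / h - INR (fl (rho / h))).
Proof. unfold mhh, mh, Gc. rewrite ht_eq. reflexivity. Qed.

Lemma abs_le_of a b B : 0 <= a - b <= B -> Rabs (b - a) <= B.
Proof. intros. rewrite Rabs_minus_sym, Rabs_right; lra. Qed.
Lemma abs_le_of' a b B : 0 <= a - b <= B -> Rabs (a - b) <= B.
Proof. intros. rewrite Rabs_right; lra. Qed.

Lemma Gc_lip_s h n j r : 0 < h -> 0 <= r <= 1 -> forall s s',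
  Rabs (Gc h n j s r - Gc h n j s' r) <= Sm * LA * (c0 * h) * Rabs (s - s').
Proof.
  intros Hh Hr.
  assert (T1 : Rabs (MM h (S n) j - MM h n j) <= Sm * LA * (c0 * h)).
  { apply abs_le_of. pose proof (MM_time h n j Hh). replace (Sm * LA * (c0 * h)) with (c0 * h * Sm * LA) by ring. auto. }
  assert (T2 : Rabs (MM h (S n) (S j) - MM h n (S j)) <= Sm * LA * (c0 * h)).
  { apply abs_le_of. pose proof (MM_time h n (S j) Hh). replace (Sm * LA * (c0 * h)) with (c0 * h * Sm * LA) by ring. auto. }
  unfold Gc. destruct diag.
  - apply (pw2 (fun s => if Rle_dec r s then MM h n j + s * (MM h (S n) j - MM h n j) + r * (MM h (S n) (S j) - MM h (S n) j)
     else MM h n j + r * (MM h n (S j) - MM h n j) + s * (MM h (S n) (S j) - MM h n (S j))) r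
      (MM h n j + r * (MM h (S n) (S j) - MM h (S n) j)) (MM h (S n) j - MM h n j)
      (MM h n j + r * (MM h n (S j) - MM h n j)) (MM h (S n) (S j) - MM h n (S j))); auto.
    + intros s0 Hs0. destruct (Rle_dec r s0); [assert (s0 = r) by lra; subst; ring|ring].
    + intros s0 Hs0. destruct (Rle_dec r s0); [ring|lra].
  - apply (pw2 (fun s => if Rle_dec (s + r) 1 then MM h n j + s * (MM h (S n) j - MM h n j) + r * (MM h n (S j) - MM h n j)
     else MM h (S n) (S j) + (1 - s) * (MM h n (S j) - MM h (S n) (S j)) + (1 - r) * (MM h (S n) j - MM h (S n) (S j))) (1 - r)
      (MM h (S n) (S j) + (MM h n (S j) - MM h (S n) (S j)) + (1 - r) * (MM h (S n) j - MM h (S n) (S j))) (MM h (S n) (S j) - MM h n (S j))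
      (MM h n j + r * (MM h n (S j) - MM h n j)) (MM h (S n) j - MM h n j)); auto.
    + intros s0 Hs0. destruct (Rle_dec (s0 + r) 1); [ring|lra].
    + intros s0 Hs0. destruct (Rle_dec (s0 + r) 1); [|ring]. assert (s0 = 1 - r) by lra. subst. ring.
Qed.

Lemma Gc_lip_r h n j s : 0 < h -> 0 <= s <= 1 -> forall r r',
  Rabs (Gc h n j s r - Gc h n j s r') <= Lm * h * Rabs (r - r').
Proof.
  intros Hh Hs.
  assert (T1 : Rabs (MM h (S n) (S j) - MM h (S n) j) <= Lm * h) by (apply abs_le_of', MM_space; auto).
  assert (T2 : Rabs (MM h n (S j) - MM h n j) <= Lm * h) by (apply abs_le_of', MM_space; auto).
  unfold Gc. destruct diag.
  - apply (pw2 (fun r => if Rle_dec r s then MM h n j + s * (MM h (S n) j - MM h n j) + r * (MM h (S n) (S j) - MM h (S n) j)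
     else MM h n j + r * (MM h n (S j) - MM h n j) + s * (MM h (S n) (S j) - MM h n (S j))) s
      (MM h n j + s * (MM h (S n) (S j) - MM h n (S j))) (MM h n (S j) - MM h n j)
      (MM h n j + s * (MM h (S n) j - MM h n j)) (MM h (S n) (S j) - MM h (S n) j)); auto.
    + intros r0 Hr0. destruct (Rle_dec r0 s); [ring|lra].
    + intros r0 Hr0. destruct (Rle_dec r0 s); [|ring]. assert (r0 = s) by lra. subst. ring.
  - apply (pw2 (fun r => if Rle_dec (s + r) 1 then MM h n j + s * (MM h (S n) j - MM h n j) + r * (MM h n (S j) - MM h n j)
     else MM h (S n) (S j) + (1 - s) * (MM h n (S j) - MM h (S n) (S j)) + (1 - r) * (MM h (S n) j - MM h (S n) (S j))) (1 - s)
      (MM h (S n) (S j) + (1 - s) * (MM h n (S j) - MM h (S n) (S j)) + (MM h (S n) j - MM h (S n) (S j))) (MM h (S n) (S j) - MM h (S n) j)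
      (MM h n j + s * (MM h (S n) j - MM h n j)) (MM h n (S j) - MM h n j)); auto.
    + intros r0 Hr0. destruct (Rle_dec (s + r0) 1); [ring|lra].
    + intros r0 Hr0. destruct (Rle_dec (s + r0) 1); [|ring]. assert (r0 = 1 - s) by lra. subst. ring.
Qed.

Lemma Gc_glue_s h n j r : 0 <= r < 1 -> Gc h n j 1 r = Gc h (S n) j 0 r.
Proof.
  intros Hr. unfold Gc. destruct diag.
  - destruct (Rle_dec r 1); [|lra]. destruct (Rle_dec r 0).
    + assert (r = 0) by lra. subst. ring.
    + ring.
  - destruct (Rle_dec (0 + r) 1); [|lra]. destruct (Rle_dec (1 + r) 1).
    + assert (r = 0) by lra. subst. ring.
    + ring.
Qed.

Lemma Gc_glue_r h n j s : 0 <= s < 1 -> Gc h n j s 1 = Gc h n (S j) s 0.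
Proof.
  intros Hs. unfold Gc. destruct diag.
  - destruct (Rle_dec 0 s); [|lra]. destruct (Rle_dec 1 s); [lra|]. ring.
  - destruct (Rle_dec (s + 0) 1); [|lra]. destruct (Rle_dec (s + 1) 1).
    + assert (s = 0) by lra. subst. ring.
    + ring.
Qed.

Lemma frac_range r : 0 <= r -> 0 <= r - INR (fl r) < 1.
Proof. intros; pose proof (fl_spec r H); lra. Qed.

Lemma mh_lip_t h rho t t' : 0 < h -> 0 <= rho -> 0 <= t -> 0 <= t' ->
  Rabs (mhh h t rho - mhh h t' rho) <= Sm * LA * Rabs (t - t').
Proof.
  intros Hh Hr Ht Ht'. rewrite !mh_eq.
  assert (Hch : 0 < c0 * h) by (pose proof c0_pos; nra).
  set (j := fl (rho / h)). set (r := rho / h - INR j).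
  assert (Hrr : 0 <= r < 1) by (apply frac_range; apply Rmult_le_pos; [lra|left; apply Rinv_0_lt_compat; lra]).
  assert (HK0 : 0 <= Sm * LA) by (unfold LA; pose proof (Rpower_pos Lm alpha); apply Rmult_le_pos; lra).
  pose proof (Fg_lip (c0 * h) (Sm * LA) (fun n s => Gc h n j s r) Hch) as G.
  unfold Fg in G. apply G; auto.
  - intros n s s' _ _. apply Gc_lip_s; auto. lra.
  - intros n. apply Gc_glue_s; auto.
Qed.

Lemma mh_lip_r h t rho rho' : 0 < h -> 0 <= t -> 0 <= rho -> 0 <= rho' ->
  Rabs (mhh h t rho - mhh h t rho') <= Lm * Rabs (rho - rho').
Proof.
  intros Hh Ht Hr Hr'. rewrite !mh_eq.
  assert (Hch : 0 < c0 * h) by (pose proof c0_pos; nra).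
  set (n := fl (t / (c0 * h))). set (s := t / (c0 * h) - INR n).
  assert (Hss : 0 <= s < 1) by (apply frac_range; apply Rmult_le_pos; [lra|left; apply Rinv_0_lt_compat; lra]).
  pose proof (Fg_lip h Lm (fun j r => Gc h n j s r) Hh) as G.
  unfold Fg in G. apply G; auto.
  - intros j r r' _ _. apply Gc_lip_r; auto. lra.
  - intros j. apply Gc_glue_r; auto.
Qed.

Definition Kl := Sm * LA + Lm.
Lemma Kl_pos : 0 < Kl.
Proof. unfold Kl, LA. pose proof (Rpower_pos Lm alpha). pose proof Lm_pos. nra. Qed.

Lemma mh_lip h t rho t' rho' : 0 < h -> 0 <= t -> 0 <= rho -> 0 <= t' -> 0 <= rho' ->
  Rabs (mhh h t rho - mhh h t' rho') <= Kl * (Rabs (t - t') + Rabs (rho - rho')).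
Proof.
  intros. pose proof (mh_lip_t h rho t t' H H1 H0 H2). pose proof (mh_lip_r h t' rho rho' H H2 H1 H3).
  replace (mhh h t rho - mhh h t' rho') with ((mhh h t rho - mhh h t' rho) + (mhh h t' rho - mhh h t' rho')) by ring.
  eapply Rle_trans; [apply Rabs_triang|]. unfold Kl.
  pose proof (Rabs_pos (t - t')). pose proof (Rabs_pos (rho - rho')).
  assert (0 <= Sm * LA) by (unfold LA; pose proof (Rpower_pos Lm alpha); apply Rmult_le_pos; lra).
  pose proof Lm_pos.
  assert (0 <= Sm * LA * Rabs (rho - rho')) by (apply Rmult_le_pos; lra).
  assert (0 <= Lm * Rabs (t - t')) by (apply Rmult_le_pos; lra).
  nra.
Qed.

Lemma mh_grid h n j : 0 < h -> mhh h (INR n * (c0 * h)) (INR j * h) = MM h n j.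
Proof.
  intros Hh. rewrite mh_eq. pose proof c0_pos.
  replace (INR n * (c0 * h) / (c0 * h)) with (INR n) by (field; split; lra).
  replace (INR j * h / h) with (INR j) by (field; lra).
  rewrite !fl_INR, !Rminus_diag. unfold Gc. destruct diag.
  - destruct (Rle_dec 0 0); [ring|lra].
  - destruct (Rle_dec (0 + 0) 1); [ring|lra].
Qed.


Lemma sub_step h n j as_ bs : 0 < h -> MM h n (S j) <= as_ -> MM h n j <= bs ->
  MM h (S n) (S j) * (c0 * h * HH ((as_ - bs) / h)) <= as_ - MM h (S n) (S j).
Proof.
  intros Hh H1 H2. rewrite MM_step.
  pose proof (MM_range h n (S j) Hh). pose proof (MM_range h n j Hh).
  pose proof (f_mono h (MM h n (S j)) as_ (MM h n j) bs Hh ltac:(lra) H1 ltac:(lra) H2) as F.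
  pose proof (Dn_pos h as_ bs Hh) as D.
  set (A := MM h n (S j) / Dn h (MM h n (S j)) (MM h n j)) in *.
  assert (A * Dn h as_ bs <= as_).
  { apply Rmult_le_reg_r with (/ Dn h as_ bs); [apply Rinv_0_lt_compat; lra|].
    rewrite Rmult_assoc, Rinv_r, Rmult_1_r by lra. exact F. }
  unfold Dn in H3. lra.
Qed.

Lemma super_step k n j as_ bs : 0 < k -> as_ <= MM k n (S j) -> bs <= MM k n j ->
  as_ - MM k (S n) (S j) <= MM k (S n) (S j) * (c0 * k * HH ((as_ - bs) / k)).
Proof.
  intros Hk H1 H2.
  pose proof (MM_range k (S n) (S j) Hk) as RB.
  pose proof (Dn_pos k as_ bs Hk) as D.
  assert (as_ <= MM k (S n) (S j) * Dn k as_ bs).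
  { destruct (Rlt_dec as_ 0). - pose proof (Dn_ge1 k as_ bs Hk). nra.
    - rewrite MM_step. pose proof (MM_range k n (S j) Hk).
      pose proof (f_mono k as_ (MM k n (S j)) bs (MM k n j) Hk ltac:(lra) H1 ltac:(lra) H2) as F.
      rewrite <- MM_step in F |- *.
      apply Rmult_le_reg_r with (/ Dn k as_ bs); [apply Rinv_0_lt_compat; lra|].
      rewrite Rmult_assoc, Rinv_r, Rmult_1_r by lra. exact F. }
  unfold Dn in H. lra.
Qed.


Definition pen eps tx rx ty ry := ((tx - ty)^2 + (rx - ry)^2) / (2 * eps).
Definition Phi h k eps eta n j n' j' :=
  MM h n j - MM k n' j' - pen eps (INR n * (c0 * h)) (INR j * h) (INR n' * (c0 * k)) (INR j' * k)
  - eta * (INR n * (c0 * h)).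
Definition Cb := Lm ^ 2 + (Sm * LA) ^ 2.

Lemma quad_bound eps L u : 0 < eps -> L * Rabs u - u ^ 2 / (2 * eps) <= L ^ 2 * eps / 2.
Proof.
  intros He. assert (E : u ^ 2 = Rabs u ^ 2) by (rewrite RPow_abs, Rabs_right; [auto| apply Rle_ge; nra]).
  rewrite E. set (a := Rabs u).
  assert (L ^ 2 * eps / 2 - (L * a - a ^ 2 / (2 * eps)) = (a - L * eps) ^ 2 / (2 * eps)) by (field; lra).
  assert (0 <= (a - L * eps) ^ 2 / (2 * eps)).
  { apply Rmult_le_pos; [apply pow2_ge_0| left; apply Rinv_0_lt_compat; lra]. }
  lra.
Qed.

Lemma m0_abs_lip x y : 0 <= x -> 0 <= y -> Rabs (m0 x - m0 y) <= Lm * Rabs (x - y).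
Proof.
  intros Hx Hy. destruct (Rle_dec x y).
  - pose proof (m0_lip x y Hx r). pose proof (Hm0mono x y Hx r).
    rewrite Rabs_minus_sym, Rabs_right, (Rabs_minus_sym x), Rabs_right; lra.
  - pose proof (m0_lip y x Hy ltac:(lra)). pose proof (Hm0mono y x Hy ltac:(lra)).
    rewrite Rabs_right, Rabs_right; lra.
Qed.

Lemma pen_nonneg eps a b c d : 0 < eps -> 0 <= pen eps a b c d.
Proof. intros; unfold pen; apply Rmult_le_pos; [apply Rplus_le_le_0_compat; apply pow2_ge_0|left; apply Rinv_0_lt_compat; lra]. Qed.

Lemma Cb_ge eps a b : 0 < eps -> Lm * Rabs a + Sm * LA * Rabs b - (b ^ 2 + a ^ 2) / (2 * eps) <= Cb * eps.
Proof.
  intros He. pose proof (quad_bound eps Lm a He). pose proof (quad_bound eps (Sm * LA) b He).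
  unfold Cb. replace ((b ^ 2 + a ^ 2) / (2 * eps)) with (a ^ 2 / (2 * eps) + b ^ 2 / (2 * eps)) by (field; lra).
  assert (0 <= (Lm ^ 2 + (Sm * LA) ^ 2) * eps) by (apply Rmult_le_pos; [apply Rplus_le_le_0_compat; apply pow2_ge_0|lra]).
  lra.
Qed.

Lemma Cb_ge1 eps a b : 0 < eps -> Lm * Rabs a - (b ^ 2 + a ^ 2) / (2 * eps) <= Cb * eps.
Proof.
  intros He. pose proof (Cb_ge eps a b He).
  assert (0 <= Sm * LA * Rabs b).
  { apply Rmult_le_pos; [|apply Rabs_pos]. unfold LA. pose proof (Rpower_pos Lm alpha). apply Rmult_le_pos; lra. }
  lra.
Qed.

Lemma phi_at_max h k eps eta N J N' J' n j n' j' :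
  0 < h -> 0 < k -> 0 < eps ->
  (c0 * h + c0 * k) / (2 * eps) + Sm * (alpha * Lp) * (h + k) / (2 * eps) < eta ->
  (n <= N)%nat -> (j <= J)%nat -> (n' <= N')%nat -> (j' <= J')%nat ->
  (forall a b c d, (a <= N)%nat -> (b <= J)%nat -> (c <= N')%nat -> (d <= J')%nat ->
      Phi h k eps eta a b c d <= Phi h k eps eta n j n' j') ->
  Phi h k eps eta n j n' j' <= Cb * eps.
Proof.
  intros Hh Hk He Heta Hn Hj Hn' Hj' Hmax.
  pose proof c0_pos as Hc0. pose proof Lp_pos as HLp. pose proof Lm_pos as HLm.
  assert (Heta0 : 0 <= eta).
  { eapply Rle_trans; [|left; exact Heta].
    apply Rplus_le_le_0_compat; apply Rmult_le_pos; try (left; apply Rinv_0_lt_compat; lra).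
    - nra. - apply Rmult_le_pos; [|lra]. apply Rmult_le_pos; [lra|]. nra. }
  set (tx := INR n * (c0 * h)). set (rx := INR j * h). set (ty := INR n' * (c0 * k)). set (ry := INR j' * k).
  assert (Htx : 0 <= tx) by (apply Rmult_le_pos; [apply pos_INR|nra]).
  assert (Hrx : 0 <= rx) by (apply Rmult_le_pos; [apply pos_INR|lra]).
  assert (Hty : 0 <= ty) by (apply Rmult_le_pos; [apply pos_INR|nra]).
  assert (Hry : 0 <= ry) by (apply Rmult_le_pos; [apply pos_INR|lra]).
  assert (HPhi : Phi h k eps eta n j n' j' = MM h n j - MM k n' j' - pen eps tx rx ty ry - eta * tx) by reflexivity.
  assert (Hpe : pen eps tx rx ty ry = ((tx - ty)^2 + (rx - ry)^2) / (2 * eps)) by reflexivity.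
  pose proof (MM_range h n j Hh) as RA. pose proof (MM_range k n' j' Hk) as RB.
  assert (HetaT : 0 <= eta * tx) by (apply Rmult_le_pos; lra).
  assert (HCb : 0 <= Cb * eps) by (unfold Cb; apply Rmult_le_pos; [nra|lra]).
  destruct n as [|n1].
  {
    rewrite HPhi. unfold tx in *. simpl INR in *. rewrite Rmult_0_l in *.
    rewrite MM_0. fold rx.
    pose proof (MM_time_tot k n' j' Hk) as T. fold ry in T.
    replace (INR n' * (c0 * k * Sm * LA)) with (Sm * LA * ty) in T by (unfold ty; ring).
    pose proof (m0_abs_lip rx ry Hrx Hry).
    assert (Rabs (0 - ty) = ty) by (rewrite Rabs_left1; lra).
    pose proof (Cb_ge eps (rx - ry) (0 - ty) He). rewrite H0 in H1. rewrite Hpe.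
    assert (m0 rx - m0 ry <= Lm * Rabs (rx - ry)) by (pose proof (Rle_abs (m0 rx - m0 ry)); lra).
    lra. }
  destruct j as [|j1].
  { rewrite HPhi. rewrite MM_n0. pose proof (pen_nonneg eps tx rx ty ry He). lra. }
  destruct n' as [|n1'].
  { rewrite HPhi, MM_0. fold ry.
    pose proof (MM_le_m0 h (S n1) (S j1) Hh). fold rx in H.
    pose proof (m0_abs_lip rx ry Hrx Hry).
    assert (m0 rx - m0 ry <= Lm * Rabs (rx - ry)) by (pose proof (Rle_abs (m0 rx - m0 ry)); lra).
    pose proof (Cb_ge1 eps (rx - ry) (tx - ty) He). rewrite Hpe. lra. }
  destruct j' as [|j1'].
  { rewrite HPhi, MM_n0.
    pose proof (MM_le_lin h (S n1) (S j1) Hh). fold rx in H.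
    assert (Ery : ry = 0) by (unfold ry; simpl; ring).
    pose proof (Cb_ge1 eps (rx - ry) (tx - ty) He). rewrite Ery in H0 |- *. rewrite Rabs_right in H0 by lra.
    unfold pen. lra. }
  set (A := MM h (S n1) (S j1)) in *. set (B := MM k (S n1') (S j1')) in *.
  destruct (Rlt_dec A B) as [HAB|HAB].
  { rewrite HPhi. pose proof (pen_nonneg eps tx rx ty ry He). lra. }
  exfalso.
  set (tau := c0 * h). set (kap := c0 * k).
  assert (Htau : 0 < tau) by (unfold tau; nra). assert (Hkap : 0 < kap) by (unfold kap; nra).
  assert (Etx : INR n1 * (c0 * h) = tx - tau) by (unfold tx, tau; rewrite S_INR; ring).
  assert (Ety : INR n1' * (c0 * k) = ty - kap) by (unfold ty, kap; rewrite S_INR; ring).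
  assert (Erx : INR j1 * h = rx - h) by (unfold rx; rewrite S_INR; ring).
  assert (Ery : INR j1' * k = ry - k) by (unfold ry; rewrite S_INR; ring).
  pose proof (Hmax n1 (S j1) (S n1') (S j1') ltac:(lia) Hj ltac:(lia) Hj') as M1.
  pose proof (Hmax n1 j1 (S n1') (S j1') ltac:(lia) ltac:(lia) ltac:(lia) Hj') as M2.
  unfold Phi in M1, M2. rewrite Etx in M1, M2. rewrite Erx in M2. fold tau in M1, M2. fold rx ty ry A B in M1, M2.
  replace (INR (S n1) * tau) with tx in M1, M2 by (unfold tx, tau; ring).
  set (as_ := A + pen eps (tx - tau) rx ty ry - pen eps tx rx ty ry - eta * tau).
  set (bs := A + pen eps (tx - tau) (rx - h) ty ry - pen eps tx rx ty ry - eta * tau).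
  assert (Ha1 : MM h n1 (S j1) <= as_) by (unfold as_; lra).
  assert (Hb1 : MM h n1 j1 <= bs) by (unfold bs; lra).
  pose proof (sub_step h n1 j1 as_ bs Hh Ha1 Hb1) as SS. fold A in SS.
  assert (Eab : (as_ - bs) / h = (rx - ry) / eps - h / (2 * eps)) by (unfold as_, bs, pen; field; lra).
  assert (Eas : as_ - A = tau * (- (tx - ty) / eps + tau / (2 * eps) - eta)) by (unfold as_, pen; field; lra).
  rewrite Eab, Eas in SS. fold tau in SS.
  set (u := HH ((rx - ry) / eps - h / (2 * eps))) in *.
  assert (SS' : A * u <= - (tx - ty) / eps + tau / (2 * eps) - eta).
  { apply Rmult_le_reg_l with tau; auto. replace (tau * (A * u)) with (A * (tau * u)) by ring. auto. }
  pose proof (Hmax (S n1) (S j1) n1' (S j1') Hn Hj ltac:(lia) Hj') as M3.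
  pose proof (Hmax (S n1) (S j1) n1' j1' Hn Hj ltac:(lia) ltac:(lia)) as M4.
  unfold Phi in M3, M4. rewrite Ety in M3, M4. rewrite Ery in M4. fold kap in M3, M4. fold tx rx ry A B in M3, M4.
  replace (INR (S n1') * kap) with ty in M3, M4 by (unfold ty, kap; ring).
  set (as2 := B + pen eps tx rx ty ry - pen eps tx rx (ty - kap) ry).
  set (bs2 := B + pen eps tx rx ty ry - pen eps tx rx (ty - kap) (ry - k)).
  assert (Ha2 : as2 <= MM k n1' (S j1')) by (unfold as2; lra).
  assert (Hb2 : bs2 <= MM k n1' j1') by (unfold bs2; lra).
  pose proof (super_step k n1' j1' as2 bs2 Hk Ha2 Hb2) as SP. fold B in SP.
  assert (Eab2 : (as2 - bs2) / k = (rx - ry) / eps + k / (2 * eps)) by (unfold as2, bs2, pen; field; lra).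
  assert (Eas2 : as2 - B = kap * (- (tx - ty) / eps - kap / (2 * eps))) by (unfold as2, pen; field; lra).
  rewrite Eab2, Eas2 in SP. fold kap in SP.
  set (v := HH ((rx - ry) / eps + k / (2 * eps))) in *.
  assert (SP' : - (tx - ty) / eps - kap / (2 * eps) <= B * v).
  { apply Rmult_le_reg_l with kap; auto. replace (kap * (B * v)) with (B * (kap * v)) by ring. auto. }
  assert (Huv : (rx - ry) / eps - h / (2 * eps) <= (rx - ry) / eps + k / (2 * eps)).
  { assert (0 <= h / (2 * eps)) by (apply Rmult_le_pos; [lra|left; apply Rinv_0_lt_compat; lra]).
    assert (0 <= k / (2 * eps)) by (apply Rmult_le_pos; [lra|left; apply Rinv_0_lt_compat; lra]). lra. }
  pose proof (HH_lip _ _ Huv) as [L1 L2]. fold u v in L1, L2.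
  replace ((rx - ry) / eps + k / (2 * eps) - ((rx - ry) / eps - h / (2 * eps))) with ((h + k) / (2 * eps)) in L2 by (field; lra).
  pose proof (HH_nonneg ((rx - ry) / eps - h / (2 * eps))) as Hu0. fold u in Hu0.
  assert (A * u >= B * u) by (apply Rle_ge, Rmult_le_compat_r; lra).
  assert (B * (v - u) <= Sm * (alpha * Lp * ((h + k) / (2 * eps)))) by (apply Rmult_le_compat; lra).
  assert (E1 : Sm * (alpha * Lp * ((h + k) / (2 * eps))) = Sm * (alpha * Lp) * (h + k) / (2 * eps)) by (field; lra).
  assert (E2 : tau / (2 * eps) + kap / (2 * eps) = (c0 * h + c0 * k) / (2 * eps)) by (unfold tau, kap; field; lra).
  lra.
Qed.

Lemma phi_bound h k eps eta N J N' J' :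
  0 < h -> 0 < k -> 0 < eps ->
  (c0 * h + c0 * k) / (2 * eps) + Sm * (alpha * Lp) * (h + k) / (2 * eps) < eta ->
  forall a b c d, (a <= N)%nat -> (b <= J)%nat -> (c <= N')%nat -> (d <= J')%nat ->
      Phi h k eps eta a b c d <= Cb * eps.
Proof.
  intros Hh Hk He Heta a b c d Ha0 Hb Hc Hd.
  destruct (finmax4 (Phi h k eps eta) N J N' J') as [n [j [n' [j' [H1 [H2 [H3 [H4 H5]]]]]]]].
  eapply Rle_trans; [apply H5; auto|].
  apply (phi_at_max h k eps eta N J N' J'); auto.
Qed.


Lemma near_grid h t rho : 0 < h -> 0 <= t -> 0 <= rho ->
  Rabs (mhh h t rho - MM h (fl (t / (c0 * h))) (fl (rho / h))) <= Kl * (c0 * h + h) /\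
  0 <= t - INR (fl (t / (c0 * h))) * (c0 * h) <= c0 * h /\
  0 <= rho - INR (fl (rho / h)) * h <= h.
Proof.
  intros Hh Ht Hr. pose proof c0_pos.
  assert (Hch : 0 < c0 * h) by nra.
  pose proof (fl_cell (c0 * h) Hch t Ht) as [A1 A2]. pose proof (fl_cell h Hh rho Hr) as [B1 B2].
  rewrite S_INR in A2, B2.
  assert (G1 : 0 <= t - INR (fl (t / (c0 * h))) * (c0 * h) <= c0 * h) by lra.
  assert (G2 : 0 <= rho - INR (fl (rho / h)) * h <= h) by lra.
  split; [|split; auto].
  rewrite <- mh_grid by auto.
  eapply Rle_trans; [apply mh_lip; auto; apply Rmult_le_pos; try apply pos_INR; lra|].
  apply Rmult_le_compat_l; [left; apply Kl_pos|].
  rewrite !Rabs_right by lra. lra.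
Qed.

Lemma cauchy_pt h k eps eta t rho : 0 < h -> 0 < k -> 0 < eps -> 0 <= t -> 0 <= rho ->
  (c0 * h + c0 * k) / (2 * eps) + Sm * (alpha * Lp) * (h + k) / (2 * eps) < eta ->
  mhh h t rho - mhh k t rho <=
    Cb * eps + ((c0 * h + c0 * k) ^ 2 + (h + k) ^ 2) / (2 * eps) + eta * t + Kl * (c0 * h + h + c0 * k + k).
Proof.
  intros Hh Hk He Ht Hr Heta. pose proof c0_pos.
  destruct (near_grid h t rho Hh Ht Hr) as [N1 [T1 R1]].
  destruct (near_grid k t rho Hk Ht Hr) as [N2 [T2 R2]].
  set (n := fl (t / (c0 * h))) in *. set (j := fl (rho / h)) in *.
  set (n' := fl (t / (c0 * k))) in *. set (j' := fl (rho / k)) in *.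
  pose proof (phi_bound h k eps eta n j n' j' Hh Hk He Heta n j n' j' (le_n _) (le_n _) (le_n _) (le_n _)) as P.
  unfold Phi in P.
  set (tx := INR n * (c0 * h)) in *. set (rx := INR j * h) in *.
  set (ty := INR n' * (c0 * k)) in *. set (ry := INR j' * k) in *.
  assert (Hpen : pen eps tx rx ty ry <= ((c0 * h + c0 * k) ^ 2 + (h + k) ^ 2) / (2 * eps)).
  { unfold pen. apply Rmult_le_compat_r; [left; apply Rinv_0_lt_compat; lra|].
    assert ((tx - ty) ^ 2 <= (c0 * h + c0 * k) ^ 2).
    { rewrite <- !(Rsqr_pow2). apply Rsqr_le_abs_1. rewrite (Rabs_right (c0*h+c0*k)) by nra.
      apply Rabs_le. lra. }
    assert ((rx - ry) ^ 2 <= (h + k) ^ 2).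
    { rewrite <- !(Rsqr_pow2). apply Rsqr_le_abs_1. rewrite (Rabs_right (h+k)) by nra.
      apply Rabs_le. lra. }
    lra. }
  assert (Heta0 : 0 <= eta).
  { eapply Rle_trans; [|left; exact Heta].
    pose proof Lp_pos.
    apply Rplus_le_le_0_compat; apply Rmult_le_pos; try (left; apply Rinv_0_lt_compat; lra).
    - nra. - apply Rmult_le_pos; [|lra]. apply Rmult_le_pos; [lra|]. nra. }
  assert (eta * tx <= eta * t) by (apply Rmult_le_compat_l; lra).
  pose proof (Rle_abs (mhh h t rho - MM h n j)) as Q1. pose proof (Rle_abs (MM k n' j' - mhh k t rho)) as Q2.
  rewrite Rabs_minus_sym in Q2.
  lra.
Qed.

Lemma Cb_pos : 0 < Cb.
Proof. unfold Cb. pose proof Lm_pos. pose proof (pow2_ge_0 (Sm * LA)). nra. Qed.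

Lemma mh_cauchy e T : 0 < e -> 0 <= T -> exists delta, 0 < delta /\
  forall h k t rho, 0 < h < delta -> 0 < k < delta -> 0 <= t <= T -> 0 <= rho ->
    Rabs (mhh h t rho - mhh k t rho) <= e.
Proof.
  intros He HT. pose proof c0_pos as Hc0. pose proof Lp_pos as HLp. pose proof Cb_pos as HCb. pose proof Kl_pos as HKl.
  set (eps := e / (4 * Cb)).
  assert (Heps : 0 < eps) by (unfold eps; apply Rmult_lt_0_compat; [lra|apply Rinv_0_lt_compat; lra]).
  set (D := (c0 ^ 2 + 1) / (2 * eps) + T * (c0 / (2 * eps) + Sm * (alpha * Lp) / (2 * eps) + 1) + Kl * (1 + c0)).
  assert (HD : 0 <= D).
  { unfold D. assert (0 < / (2 * eps)) by (apply Rinv_0_lt_compat; lra).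
    assert (0 <= (c0 ^ 2 + 1) / (2 * eps)) by (apply Rmult_le_pos; nra).
    assert (0 <= c0 / (2 * eps)) by (apply Rmult_le_pos; lra).
    assert (0 <= Sm * (alpha * Lp) / (2 * eps)) by (apply Rmult_le_pos; [|lra]; apply Rmult_le_pos; [lra|]; nra).
    assert (0 <= T * (c0 / (2 * eps) + Sm * (alpha * Lp) / (2 * eps) + 1)) by (apply Rmult_le_pos; lra).
    assert (0 <= Kl * (1 + c0)) by nra. lra. }
  exists (Rmin (1/2) (e / (4 * (D + 1)))). split.
  { apply Rmin_glb_lt; [lra|]. apply Rmult_lt_0_compat; [lra|apply Rinv_0_lt_compat; lra]. }
  assert (main : forall h k t rho, 0 < h < Rmin (1/2) (e / (4 * (D + 1))) -> 0 < k < Rmin (1/2) (e / (4 * (D + 1))) ->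
      0 <= t <= T -> 0 <= rho -> mhh h t rho - mhh k t rho <= e).
  { intros h k t rho [Hh1 Hh2] [Hk1 Hk2] Ht Hr.
    pose proof (Rmin_l (1/2) (e / (4 * (D + 1)))). pose proof (Rmin_r (1/2) (e / (4 * (D + 1)))).
    set (s := h + k).
    assert (Hs1 : s <= 1) by (unfold s; lra).
    assert (Hs2 : s * (D + 1) <= e / 2).
    { assert (s <= e / (2 * (D + 1))).
      { unfold s. replace (e / (2 * (D + 1))) with (2 * (e / (4 * (D + 1)))) by (field; lra). lra. }
      apply Rmult_le_reg_r with (/ (D + 1)); [apply Rinv_0_lt_compat; lra|].
      rewrite Rmult_assoc, Rinv_r, Rmult_1_r by lra.
      replace (e / 2 * / (D + 1)) with (e / (2 * (D + 1))) by (field; lra). auto. }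
    set (eta := (c0 * h + c0 * k) / (2 * eps) + Sm * (alpha * Lp) * (h + k) / (2 * eps) + s).
    pose proof (cauchy_pt h k eps eta t rho Hh1 Hk1 Heps (proj1 Ht) Hr ltac:(unfold eta, s; lra)) as C.
    eapply Rle_trans; [exact C|].
    assert (E1 : Cb * eps = e / 4) by (unfold eps; field; lra).
    assert (E2 : ((c0 * h + c0 * k) ^ 2 + (h + k) ^ 2) / (2 * eps) = s ^ 2 * ((c0 ^ 2 + 1) / (2 * eps))) by (unfold s; field; lra).
    assert (E3 : Kl * (c0 * h + h + c0 * k + k) = s * (Kl * (1 + c0))) by (unfold s; ring).
    assert (E4 : eta = s * (c0 / (2 * eps) + Sm * (alpha * Lp) / (2 * eps) + 1)) by (unfold eta, s; field; lra).
    assert (Hpos1 : 0 <= c0 / (2 * eps) + Sm * (alpha * Lp) / (2 * eps) + 1).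
    { assert (0 <= c0 / (2 * eps)) by (apply Rmult_le_pos; [lra|left; apply Rinv_0_lt_compat; lra]).
      assert (0 <= Sm * (alpha * Lp) / (2 * eps)) by (apply Rmult_le_pos; [apply Rmult_le_pos; [lra|nra]|left; apply Rinv_0_lt_compat; lra]).
      lra. }
    assert (E5 : eta * t <= s * (T * (c0 / (2 * eps) + Sm * (alpha * Lp) / (2 * eps) + 1))).
    { rewrite E4. replace (s * (T * _)) with ((s * (c0 / (2 * eps) + Sm * (alpha * Lp) / (2 * eps) + 1)) * T) by ring.
      apply Rmult_le_compat_l; [|lra]. apply Rmult_le_pos; [unfold s; lra|lra]. }
    assert (Hq : 0 <= (c0 ^ 2 + 1) / (2 * eps)) by (apply Rmult_le_pos; [nra|left; apply Rinv_0_lt_compat; lra]).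
    assert (E6 : s ^ 2 * ((c0 ^ 2 + 1) / (2 * eps)) <= s * ((c0 ^ 2 + 1) / (2 * eps))).
    { apply Rmult_le_compat_r; auto. unfold s in *. nra. }
    assert (s * D = s * ((c0 ^ 2 + 1) / (2 * eps)) + s * (T * (c0 / (2 * eps) + Sm * (alpha * Lp) / (2 * eps) + 1)) + s * (Kl * (1 + c0))) by (unfold D; ring).
    assert (0 <= s) by (unfold s; lra).
    nra. }
  intros h k t rho Hh Hk Ht Hr. apply Rabs_le. split.
  - pose proof (main k h t rho Hk Hh Ht Hr). lra.
  - apply main; auto.
Qed.


Definition seqh (i : nat) := / (INR i + 1).
Lemma seqh_pos i : 0 < seqh i.
Proof. unfold seqh. apply Rinv_0_lt_compat. pose proof (pos_INR i). lra. Qed.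
Lemma seqh_small d : 0 < d -> exists N, forall i, (i >= N)%nat -> seqh i < d.
Proof.
  intros Hd. destruct (archimed_cor1 d Hd) as [N [H1 H2]]. exists N. intros i Hi.
  unfold seqh. eapply Rle_lt_trans; [|exact H1].
  apply Rinv_le_contravar; [apply lt_0_INR; lia|]. apply le_INR in Hi. lra.
Qed.

Definition mlim t rho := epsilon (inhabits 0) (fun l => Un_cv (fun i => mhh (seqh i) t rho) l).

Lemma mlim_cv t rho : 0 <= t -> 0 <= rho -> Un_cv (fun i => mhh (seqh i) t rho) (mlim t rho).
Proof.
  intros Ht Hr. unfold mlim. apply epsilon_spec.
  assert (Cauchy_crit (fun i => mhh (seqh i) t rho)).
  { intros e He. destruct (mh_cauchy (e/2) t ltac:(lra) Ht) as [d [Hd Hc]].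
    destruct (seqh_small d Hd) as [N HN]. exists N. intros a b Ha1 Hb. unfold Rdist.
    eapply Rle_lt_trans; [apply Hc; auto; try (split; [apply seqh_pos| apply HN; auto]); lra|lra]. }
  destruct (R_complete _ H) as [l Hl]. exists l. exact Hl.
Qed.

Lemma lim_close (u : nat -> R) l c e : Un_cv u l -> (exists N, forall i, (i >= N)%nat -> Rabs (c - u i) <= e) ->
  Rabs (c - l) <= e.
Proof.
  intros Hu [N HN]. destruct (Rle_dec (Rabs (c - l)) e) as [|Hn]; auto. exfalso.
  destruct (Hu ((Rabs (c - l) - e)/2) ltac:(lra)) as [N' HN'].
  specialize (HN (max N N') ltac:(lia)). specialize (HN' (max N N') ltac:(lia)). unfold Rdist in HN'.
  pose proof (Rabs_triang (c - u (max N N')) (u (max N N') - l)).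
  replace (c - u (max N N') + (u (max N N') - l)) with (c - l) in H by ring. lra.
Qed.

Lemma m_approx e T : 0 < e -> 0 <= T -> exists delta, 0 < delta /\
  forall h t rho, 0 < h < delta -> 0 <= t <= T -> 0 <= rho -> Rabs (mhh h t rho - mlim t rho) <= e.
Proof.
  intros He HT. destruct (mh_cauchy e T He HT) as [d [Hd Hc]]. exists d. split; auto.
  intros h t rho Hh Ht Hr. apply (lim_close (fun i => mhh (seqh i) t rho)); [apply mlim_cv; lra|].
  destruct (seqh_small d Hd) as [N HN]. exists N. intros i Hi. apply Hc; auto. split; [apply seqh_pos|auto].
Qed.

Lemma le_eps x y : (forall e, 0 < e -> x <= y + e) -> x <= y.
Proof. intros H. destruct (Rle_dec x y); auto. exfalso. specialize (H ((x - y)/2) ltac:(lra)). lra. Qed.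

Lemma m_lip t rho t' rho' : 0 <= t -> 0 <= rho -> 0 <= t' -> 0 <= rho' ->
  Rabs (mlim t rho - mlim t' rho') <= Kl * (Rabs (t - t') + Rabs (rho - rho')).
Proof.
  intros. apply le_eps. intros e He.
  destruct (m_approx (e/2) (Rmax t t') ltac:(lra) ltac:(apply Rmax_case; lra)) as [d [Hd Hap]].
  pose proof (Hap (d/2) t rho ltac:(lra) ltac:(split; [lra|apply Rmax_l]) H0).
  pose proof (Hap (d/2) t' rho' ltac:(lra) ltac:(split; [lra|apply Rmax_r]) H2).
  pose proof (mh_lip (d/2) t rho t' rho' ltac:(lra) H H0 H1 H2).
  pose proof (Rabs_triang (mlim t rho - mhh (d/2) t rho) (mhh (d/2) t rho - mlim t' rho')).
  pose proof (Rabs_triang (mhh (d/2) t rho - mhh (d/2) t' rho') (mhh (d/2) t' rho' - mlim t' rho')).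
  replace (mlim t rho - mhh (d/2) t rho + (mhh (d/2) t rho - mlim t' rho')) with (mlim t rho - mlim t' rho') in H6 by ring.
  replace (mhh (d/2) t rho - mhh (d/2) t' rho' + (mhh (d/2) t' rho' - mlim t' rho')) with (mhh (d/2) t rho - mlim t' rho') in H7 by ring.
  rewrite Rabs_minus_sym in H3. lra.
Qed.

Lemma m_lip_r t rho rho' : 0 <= t -> 0 <= rho -> 0 <= rho' ->
  Rabs (mlim t rho - mlim t rho') <= Lm * Rabs (rho - rho').
Proof.
  intros. apply le_eps. intros e He.
  destruct (m_approx (e/2) t ltac:(lra) H) as [d [Hd Hap]].
  pose proof (Hap (d/2) t rho ltac:(lra) ltac:(lra) H0).
  pose proof (Hap (d/2) t rho' ltac:(lra) ltac:(lra) H1).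
  pose proof (mh_lip_r (d/2) t rho rho' ltac:(lra) H H0 H1).
  pose proof (Rabs_triang (mlim t rho - mhh (d/2) t rho) (mhh (d/2) t rho - mlim t rho')).
  pose proof (Rabs_triang (mhh (d/2) t rho - mhh (d/2) t rho') (mhh (d/2) t rho' - mlim t rho')).
  replace (mlim t rho - mhh (d/2) t rho + (mhh (d/2) t rho - mlim t rho')) with (mlim t rho - mlim t rho') in H5 by ring.
  replace (mhh (d/2) t rho - mhh (d/2) t rho' + (mhh (d/2) t rho' - mlim t rho')) with (mhh (d/2) t rho - mlim t rho') in H6 by ring.
  rewrite Rabs_minus_sym in H2. lra.
Qed.

Lemma m_grid_close e t rho : 0 < e -> 0 <= t -> 0 <= rho -> exists h0, 0 < h0 /\ forall h, 0 < h < h0 ->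
  Rabs (mlim t rho - MM h (fl (t / (c0 * h))) (fl (rho / h))) <= e.
Proof.
  intros He Ht Hr. destruct (m_approx (e/2) t ltac:(lra) Ht) as [d [Hd Hap]].
  pose proof Kl_pos. pose proof c0_pos.
  set (h0 := Rmin d (e / (2 * (Kl * (c0 + 1))))).
  assert (Hh0 : 0 < h0).
  { unfold h0. apply Rmin_glb_lt; auto. apply Rmult_lt_0_compat; [lra|]. apply Rinv_0_lt_compat. nra. }
  exists h0. split; auto. intros h [Hh1 Hh2].
  pose proof (Rmin_l d (e / (2 * (Kl * (c0 + 1))))). pose proof (Rmin_r d (e / (2 * (Kl * (c0 + 1))))). fold h0 in H1, H2.
  destruct (near_grid h t rho Hh1 Ht Hr) as [N1 _].
  pose proof (Hap h t rho ltac:(lra) ltac:(lra) Hr).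
  assert (Kl * (c0 * h + h) <= e / 2).
  { replace (Kl * (c0 * h + h)) with ((Kl * (c0 + 1)) * h) by ring.
    apply Rle_trans with ((Kl * (c0 + 1)) * (e / (2 * (Kl * (c0 + 1))))).
    - apply Rmult_le_compat_l; nra.
    - right. field. nra. }
  pose proof (Rabs_triang (mlim t rho - mhh h t rho) (mhh h t rho - MM h (fl (t / (c0 * h))) (fl (rho / h)))).
  replace (mlim t rho - mhh h t rho + (mhh h t rho - MM h (fl (t / (c0 * h))) (fl (rho / h)))) with
    (mlim t rho - MM h (fl (t / (c0 * h))) (fl (rho / h))) in H5 by ring.
  rewrite Rabs_minus_sym in H3. lra.
Qed.

Lemma m_range t rho : 0 <= t -> 0 <= rho -> 0 <= mlim t rho <= Sm.
Proof.
  intros Ht Hr. split.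
  - apply Ropp_le_cancel. rewrite Ropp_0. apply le_eps. intros e He.
    destruct (m_grid_close e t rho He Ht Hr) as [h0 [Hh0 Hc]].
    pose proof (Hc (h0/2) ltac:(lra)). pose proof (MM_range (h0/2) (fl (t / (c0 * (h0/2)))) (fl (rho / (h0/2))) ltac:(lra)).
    pose proof (Rle_abs (- (mlim t rho - MM (h0 / 2) (fl (t / (c0 * (h0 / 2)))) (fl (rho / (h0 / 2)))))). rewrite Rabs_Ropp in H1. lra.
  - apply le_eps. intros e He.
    destruct (m_grid_close e t rho He Ht Hr) as [h0 [Hh0 Hc]].
    pose proof (Hc (h0/2) ltac:(lra)). pose proof (MM_range (h0/2) (fl (t / (c0 * (h0/2)))) (fl (rho / (h0/2))) ltac:(lra)).
    pose proof (Rle_abs (mlim t rho - MM (h0 / 2) (fl (t / (c0 * (h0 / 2)))) (fl (rho / (h0 / 2))))). lra.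
Qed.

Lemma fl_zero x : fl (0 / x) = 0%nat.
Proof. unfold Rdiv. rewrite Rmult_0_l. apply (fl_INR 0). Qed.

Lemma m_init_close rho e : 0 <= rho -> 0 < e -> Rabs (mlim 0 rho - m0 rho) <= e.
Proof.
  intros Hr He.
  destruct (m_grid_close (e/2) 0 rho ltac:(lra) ltac:(lra) Hr) as [h0 [Hh0 Hc]].
  pose proof Lm_pos.
  set (h := Rmin (h0/2) (e / (2 * Lm))).
  assert (Hh : 0 < h) by (unfold h; apply Rmin_glb_lt; [lra|]; apply Rmult_lt_0_compat; [lra|apply Rinv_0_lt_compat; lra]).
  assert (Hhh : h < h0) by (unfold h; pose proof (Rmin_l (h0/2) (e/(2*Lm))); lra).
  assert (Hhe : h <= e / (2 * Lm)) by apply Rmin_r.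
  pose proof (Hc h (conj Hh Hhh)) as C.
  rewrite fl_zero, MM_0 in C.
  pose proof (fl_cell h Hh rho Hr) as [F1 F2]. rewrite S_INR in F2.
  pose proof (m0_abs_lip (INR (fl (rho / h)) * h) rho ltac:(apply Rmult_le_pos; [apply pos_INR|lra]) Hr) as L.
  assert (Lm * Rabs (INR (fl (rho / h)) * h - rho) <= e / 2).
  { rewrite Rabs_left1 by lra.
    apply Rle_trans with (Lm * h); [apply Rmult_le_compat_l; lra|].
    apply Rle_trans with (Lm * (e / (2 * Lm))); [apply Rmult_le_compat_l; lra|right; field; lra]. }
  pose proof (Rabs_triang (mlim 0 rho - m0 (INR (fl (rho / h)) * h)) (m0 (INR (fl (rho / h)) * h) - m0 rho)).
  replace (mlim 0 rho - m0 (INR (fl (rho / h)) * h) + (m0 (INR (fl (rho / h)) * h) - m0 rho)) with (mlim 0 rho - m0 rho) in H1 by ring.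
  lra.
Qed.

Lemma m_init rho : 0 <= rho -> mlim 0 rho = m0 rho.
Proof.
  intros Hr. apply Rle_antisym; apply le_eps; intros e He; pose proof (m_init_close rho e Hr He);
  pose proof (Rle_abs (mlim 0 rho - m0 rho)); pose proof (Rle_abs (- (mlim 0 rho - m0 rho))); rewrite Rabs_Ropp in *; lra.
Qed.

Lemma m_bdry t : 0 <= t -> mlim t 0 = 0.
Proof.
  intros Ht. apply Rle_antisym; apply le_eps; intros e He;
  destruct (m_grid_close e t 0 He Ht ltac:(lra)) as [h0 [Hh0 Hc]];
  pose proof (Hc (h0/2) ltac:(lra)) as C; rewrite fl_zero, MM_n0 in C;
  pose proof (Rle_abs (mlim t 0 - 0)); pose proof (Rle_abs (- (mlim t 0 - 0))); rewrite Rabs_Ropp in *; lra.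
Qed.

Lemma m_lower t rho : 0 <= t -> t / c0 + 1 <= rho -> m0 (rho - t / c0 - 1) <= mlim t rho.
Proof.
  intros Ht Hr. pose proof c0_pos. assert (0 <= t / c0) by (apply Rmult_le_pos; [lra|left; apply Rinv_0_lt_compat; lra]).
  apply le_eps. intros e He.
  destruct (m_grid_close e t rho He Ht ltac:(lra)) as [h0 [Hh0 Hc]].
  set (h := Rmin (h0/2) 1).
  assert (Hh : 0 < h) by (unfold h; apply Rmin_glb_lt; lra).
  assert (Hhh : h < h0) by (unfold h; pose proof (Rmin_l (h0/2) 1); lra).
  pose proof (Hc h (conj Hh Hhh)) as C.
  assert (Hh1 : h <= 1) by apply Rmin_r.
  assert (Hch : 0 < c0 * h) by nra.
  pose proof (fl_cell (c0 * h) Hch t Ht) as [A1 A2]. pose proof (fl_cell h Hh rho ltac:(lra)) as [B1 B2].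
  rewrite S_INR in A2, B2.
  set (n := fl (t / (c0 * h))) in *. set (j := fl (rho / h)) in *.
  assert (E1 : INR n * h <= t / c0).
  { apply Rmult_le_reg_l with c0; auto. replace (c0 * (t / c0)) with t by (field; lra). lra. }
  assert (E2 : rho - h <= INR j * h) by lra.
  assert (Hnj : (n <= j)%nat).
  { destruct (le_lt_dec n j); auto. exfalso. assert (HSj : INR (S j) <= INR n) by (apply le_INR; lia). rewrite S_INR in HSj.
    assert ((INR j + 1) * h <= INR n * h) by (apply Rmult_le_compat_r; lra). lra. }
  pose proof (MM_lower h n j Hh Hnj).
  assert (m0 (rho - t / c0 - 1) <= m0 ((INR j - INR n) * h)).
  { apply Hm0mono; [lra|]. lra. }
  pose proof (Rle_abs (- (mlim t rho - MM h n j))). rewrite Rabs_Ropp in *. lra.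
Qed.


Lemma sqrt_le_l1 a b : sqrt (a ^ 2 + b ^ 2) <= Rabs a + Rabs b.
Proof.
  rewrite <- (sqrt_pow2 (Rabs a + Rabs b)) by (pose proof (Rabs_pos a); pose proof (Rabs_pos b); lra).
  apply sqrt_le_1_alt.
  assert (a ^ 2 = Rabs a ^ 2) by (rewrite RPow_abs, Rabs_right; [auto| apply Rle_ge; apply pow2_ge_0]).
  assert (b ^ 2 = Rabs b ^ 2) by (rewrite RPow_abs, Rabs_right; [auto| apply Rle_ge; apply pow2_ge_0]).
  rewrite H, H0. pose proof (Rabs_pos a); pose proof (Rabs_pos b). nra.
Qed.

Lemma sqrt_one a : sqrt (0 ^ 2 + a ^ 2) = Rabs a.
Proof. replace (0 ^ 2 + a ^ 2) with (Rabs a ^ 2) by (rewrite RPow_abs, Rabs_right; [ring| apply Rle_ge; apply pow2_ge_0]).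
  apply sqrt_pow2, Rabs_pos. Qed.

Lemma superdiff_p2 t0 rho0 p1 p2 : 0 < t0 -> 0 < rho0 -> superdiff mlim t0 rho0 p1 p2 -> p2 <= Lm.
Proof.
  intros Ht Hr Hs. apply le_eps. intros e He.
  destruct (Hs e He) as [d [Hd Hl]].
  set (y0 := Rmin (rho0/2) (d/2)).
  assert (Hy0 : 0 < y0) by (unfold y0; apply Rmin_glb_lt; lra).
  assert (Hy1 : y0 <= rho0/2) by apply Rmin_l. assert (Hy2 : y0 <= d/2) by apply Rmin_r.
  specialize (Hl t0 (rho0 - y0) Ht ltac:(lra)).
  replace (t0 - t0) with 0 in Hl by ring. rewrite sqrt_one in Hl.
  replace (rho0 - y0 - rho0) with (- y0) in Hl by ring. rewrite Rabs_Ropp, Rabs_right in Hl by lra.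
  specialize (Hl ltac:(lra)).
  pose proof (m_lip_r t0 rho0 (rho0 - y0) ltac:(lra) ltac:(lra) ltac:(lra)).
  replace (rho0 - (rho0 - y0)) with y0 in H by ring. rewrite (Rabs_right y0) in H by lra.
  pose proof (Rle_abs (mlim t0 rho0 - mlim t0 (rho0 - y0))).
  assert (p2 * y0 <= (Lm + e) * y0) by nra.
  apply Rmult_le_reg_r with y0; auto.
Qed.

Lemma subdiff_q2 t0 rho0 p1 p2 : 0 < t0 -> 0 < rho0 -> subdiff mlim t0 rho0 p1 p2 -> p2 <= Lm.
Proof.
  intros Ht Hr Hs. apply le_eps. intros e He.
  destruct (Hs e He) as [d [Hd Hl]].
  set (y0 := d/2).
  assert (Hy0 : 0 < y0) by (unfold y0; lra).
  specialize (Hl t0 (rho0 + y0) Ht ltac:(lra)).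
  replace (t0 - t0) with 0 in Hl by ring. rewrite sqrt_one in Hl.
  replace (rho0 + y0 - rho0) with y0 in Hl by ring. rewrite Rabs_right in Hl by lra.
  specialize (Hl ltac:(unfold y0; lra)).
  pose proof (m_lip_r t0 (rho0 + y0) rho0 ltac:(lra) ltac:(lra) ltac:(lra)).
  replace (rho0 + y0 - rho0) with y0 in H by ring. rewrite (Rabs_right y0) in H by lra.
  pose proof (Rle_abs (mlim t0 (rho0 + y0) - mlim t0 rho0)).
  assert (p2 * y0 <= (Lm + e) * y0) by nra.
  apply Rmult_le_reg_r with y0; auto.
Qed.

Lemma box_max (G : nat -> nat -> R) (inb : nat -> nat -> Prop) (dec : forall n j, {inb n j} + {~ inb n j})
  NB JB : inb NB JB -> exists n j, (n <= NB)%nat /\ (j <= JB)%nat /\ inb n j /\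
    forall a b, (a <= NB)%nat -> (b <= JB)%nat -> inb a b -> G a b <= G n j.
Proof.
  intros Hb.
  set (g := fun a b (_ _ : nat) => if dec a b then G a b else G NB JB - 1).
  destruct (finmax4 g NB JB 0 0) as [n [j [c [d [H1 [H2 [_ [_ H5]]]]]]]].
  assert (Hg : forall a b, inb a b -> g a b 0%nat 0%nat = G a b) by (intros; unfold g; destruct (dec a b); tauto).
  pose proof (H5 NB JB 0%nat 0%nat (le_n _) (le_n _) (le_n _) (le_n _)) as M.
  rewrite Hg in M by auto.
  assert (Hin : inb n j).
  { unfold g in M. destruct (dec n j); auto. lra. }
  exists n, j. repeat split; auto.
  intros a b Ha0 Hb0 Hab. specialize (H5 a b 0%nat 0%nat Ha0 Hb0 (le_n _) (le_n _)).
  unfold g in H5. destruct (dec a b); [|tauto]. destruct (dec n j); [|tauto]. auto.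
Qed.

Lemma abs_shift a x : Rabs (a - x) - Rabs a <= Rabs x.
Proof. pose proof (Rabs_triang (a - x) x). replace (a - x + x) with a in H by ring. 
  pose proof (Rabs_triang a (- x)). rewrite Rabs_Ropp in H0. unfold Rminus. lra. Qed.

Lemma abs_shift' a x : Rabs a - Rabs (a - x) <= Rabs x.
Proof. pose proof (Rabs_triang (a - x) x). replace (a - x + x) with a in H by ring. lra. Qed.


Lemma choose_h (d1 r0 Cp targ : R) : 0 < d1 -> 0 < r0 -> 0 <= Cp -> 0 < targ ->
  exists h, 0 < h /\ h < d1 /\ c0 * h <= r0 / 2 /\ h <= r0 / 2 /\ h * Cp <= targ / 2.
Proof.
  intros H1 H2 H3 H4. pose proof c0_pos.
  set (h := Rmin (d1/2) (Rmin (r0 / (2 * (c0 + 1))) (targ / (2 * (Cp + 1))))).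
  assert (A1 : h <= d1/2) by apply Rmin_l.
  assert (A2 : h <= r0 / (2 * (c0 + 1))) by (eapply Rle_trans; [apply Rmin_r|apply Rmin_l]).
  assert (A3 : h <= targ / (2 * (Cp + 1))) by (eapply Rle_trans; [apply Rmin_r|apply Rmin_r]).
  assert (A0 : 0 < h).
  { unfold h. repeat apply Rmin_glb_lt; try lra; apply Rmult_lt_0_compat; try lra; apply Rinv_0_lt_compat; lra. }
  exists h. repeat split; auto; try lra.
  - apply Rle_trans with (c0 * (r0 / (2 * (c0 + 1)))); [apply Rmult_le_compat_l; lra|].
    apply Rmult_le_reg_r with (2 * (c0 + 1)); [lra|].
    replace (c0 * (r0 / (2 * (c0 + 1))) * (2 * (c0 + 1))) with (c0 * r0) by (field; lra). nra.
  - apply Rle_trans with (r0 / (2 * (c0 + 1))); auto.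
    apply Rmult_le_reg_r with (2 * (c0 + 1)); [lra|].
    replace (r0 / (2 * (c0 + 1)) * (2 * (c0 + 1))) with r0 by (field; lra). nra.
  - apply Rle_trans with (targ / (2 * (Cp + 1)) * Cp); [apply Rmult_le_compat_r; lra|].
    apply Rmult_le_reg_r with (2 * (Cp + 1)); [lra|].
    replace (targ / (2 * (Cp + 1)) * Cp * (2 * (Cp + 1))) with (targ * Cp) by (field; lra). nra.
Qed.

Lemma grid_approx h eta0 T d1 n j : 0 < h < d1 ->
  (forall h t rho, 0 < h < d1 -> 0 <= t <= T -> 0 <= rho -> Rabs (mhh h t rho - mlim t rho) <= eta0) ->
  INR n * (c0 * h) <= T ->
  Rabs (MM h n j - mlim (INR n * (c0 * h)) (INR j * h)) <= eta0.
Proof.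
  intros Hh Hap HT. pose proof c0_pos. rewrite <- mh_grid by lra. apply Hap; auto.
  - split; auto. apply Rmult_le_pos; [apply pos_INR|nra].
  - apply Rmult_le_pos; [apply pos_INR|lra].
Qed.

Lemma final_comb m A HHv LA' Kl' d eta0 eps zeta p :
  0 <= HHv -> HHv <= LA' -> 0 <= LA' -> 0 <= Kl' -> 0 < eps -> 0 < zeta -> 0 <= d -> 0 <= eta0 ->
  A * HHv <= p -> m - Kl' * d - eta0 <= A ->
  eps * d <= eps * zeta / (2 * (LA' * Kl' + 1)) -> eta0 <= zeta / (2 * (LA' + 1)) ->
  m * HHv <= p + zeta.
Proof.
  intros. 
  assert (Hd : d <= zeta / (2 * (LA' * Kl' + 1))).
  { apply Rmult_le_reg_l with eps; auto. replace (eps * (zeta / (2 * (LA' * Kl' + 1)))) with (eps * zeta / (2 * (LA' * Kl' + 1))) by (field; nra). auto. }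
  assert (E1 : (m - A) * HHv <= (Kl' * d + eta0) * LA').
  { destruct (Rle_dec m A). - assert ((m - A) * HHv <= 0) by nra. assert (0 <= (Kl' * d + eta0) * LA') by (apply Rmult_le_pos; nra). lra.
    - apply Rmult_le_compat; nra. }
  assert (E2 : Kl' * d * LA' <= zeta / 2).
  { apply Rle_trans with (Kl' * (zeta / (2 * (LA' * Kl' + 1))) * LA').
    - apply Rmult_le_compat_r; auto. apply Rmult_le_compat_l; auto.
    - apply Rmult_le_reg_r with (2 * (LA' * Kl' + 1)); [nra|].
      replace (Kl' * (zeta / (2 * (LA' * Kl' + 1))) * LA' * (2 * (LA' * Kl' + 1))) with (zeta * (LA' * Kl')) by (field; nra).
      nra. }
  assert (E3 : eta0 * LA' <= zeta / 2).
  { apply Rle_trans with (zeta / (2 * (LA' + 1)) * LA'); [apply Rmult_le_compat_r; auto|].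
    apply Rmult_le_reg_r with (2 * (LA' + 1)); [nra|].
    replace (zeta / (2 * (LA' + 1)) * LA' * (2 * (LA' + 1))) with (zeta * LA') by (field; nra). nra. }
  nra.
Qed.


Lemma Rabs_le_inv a b : Rabs a <= b -> - b <= a <= b.
Proof. intros. pose proof (Rle_abs a). pose proof (Rle_abs (- a)). rewrite Rabs_Ropp in H1. lra. Qed.

Lemma LA_nonneg : 0 <= LA. Proof. unfold LA; left; apply Rpower_pos. Qed.

Lemma visc_sub_core t0 rho0 p1 p2 eps zeta : 0 < t0 -> 0 < rho0 -> superdiff mlim t0 rho0 p1 p2 ->
  0 < eps -> 0 < zeta -> p1 + HH (p2 - 2 * eps) * mlim t0 rho0 <= 2 * eps + zeta.
Proof.
  intros Ht0 Hr0 Hsd He Hz.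
  pose proof c0_pos as Hc0. pose proof Kl_pos as HKl. pose proof LA_nonneg as HLA.
  destruct (Hsd eps He) as [dl [Hdl Hloc]].
  set (r0 := Rmin (dl/4) (Rmin (t0/2) (rho0/2))).
  assert (Hr0a : r0 <= dl/4) by apply Rmin_l.
  assert (Hr0b : r0 <= t0/2) by (eapply Rle_trans; [apply Rmin_r|apply Rmin_l]).
  assert (Hr0c : r0 <= rho0/2) by (eapply Rle_trans; [apply Rmin_r|apply Rmin_r]).
  assert (Hr00 : 0 < r0) by (unfold r0; repeat apply Rmin_glb_lt; lra).
  set (m00 := mlim t0 rho0).
  assert (Loc : forall t rho, Rabs (t - t0) <= r0 -> Rabs (rho - rho0) <= r0 ->
    mlim t rho <= m00 + p1 * (t - t0) + p2 * (rho - rho0) + eps * (Rabs (t - t0) + Rabs (rho - rho0))).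
  { intros t rho H1 H2.
    assert (Rabs (t - t0) + Rabs (rho - rho0) <= 2 * r0) by lra.
    apply Rabs_le_inv in H1. apply Rabs_le_inv in H2.
    pose proof (sqrt_le_l1 (t - t0) (rho - rho0)).
    specialize (Hloc t rho ltac:(lra) ltac:(lra) ltac:(lra)).
    assert (eps * sqrt ((t - t0) ^ 2 + (rho - rho0) ^ 2) <= eps * (Rabs (t - t0) + Rabs (rho - rho0))) by (apply Rmult_le_compat_l; lra).
    unfold m00. lra. }
  set (psi := fun t rho => p1 * (t - t0) + p2 * (rho - rho0) + 2 * eps * (Rabs (t - t0) + Rabs (rho - rho0))).
  set (targ := Rmin (eps * r0 / 4) (Rmin (eps * zeta / (2 * (LA * Kl + 1))) (zeta / (2 * (LA + 1))))).
  assert (Tg1 : targ <= eps * r0 / 4) by apply Rmin_l.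
  assert (Tg2 : targ <= eps * zeta / (2 * (LA * Kl + 1))) by (eapply Rle_trans; [apply Rmin_r|apply Rmin_l]).
  assert (Tg3 : targ <= zeta / (2 * (LA + 1))) by (eapply Rle_trans; [apply Rmin_r|apply Rmin_r]).
  assert (Tg : 0 < targ).
  { unfold targ. repeat apply Rmin_glb_lt; apply Rmult_lt_0_compat; try nra; apply Rinv_0_lt_compat; nra. }
  set (eta0 := targ / 4).
  destruct (m_approx eta0 (t0 + r0) ltac:(unfold eta0; lra) ltac:(lra)) as [d1 [Hd1 Hap]].
  set (Cp := Kl * (c0 + 1) + (Rabs p1 + 2 * eps) * c0 + Rabs p2 + 2 * eps).
  assert (HCp : 0 <= Cp) by (unfold Cp; pose proof (Rabs_pos p1); pose proof (Rabs_pos p2); nra).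
  destruct (choose_h d1 r0 Cp targ Hd1 Hr00 HCp Tg) as [h [Hh [Hhd [Htau [Hhr Hhc]]]]].
  set (tau := c0 * h) in *.
  assert (Htau0 : 0 < tau) by (unfold tau; nra).
  set (nb := fl (t0 / tau)). set (jb := fl (rho0 / h)).
  pose proof (fl_cell tau Htau0 t0 ltac:(lra)) as [C1 C2]. fold nb in C1, C2. rewrite S_INR in C2.
  pose proof (fl_cell h Hh rho0 ltac:(lra)) as [C3 C4]. fold jb in C3, C4. rewrite S_INR in C4.
  set (inb := fun n j => Rabs (INR n * tau - t0) <= r0 /\ Rabs (INR j * h - rho0) <= r0).
  assert (dec : forall n j, {inb n j} + {~ inb n j}).
  { intros n j. unfold inb. destruct (Rle_dec (Rabs (INR n * tau - t0)) r0); [|right; tauto].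
    destruct (Rle_dec (Rabs (INR j * h - rho0)) r0); [left; auto|right; tauto]. }
  set (G := fun n j => MM h n j - psi (INR n * tau) (INR j * h)).
  assert (Hbar : inb nb jb).
  { split; apply Rabs_le; lra. }
  destruct (box_max G inb dec nb jb Hbar) as [n [j [Hn [Hj [Hin Hmax]]]]].
  assert (GA : forall a b, inb a b -> Rabs (MM h a b - mlim (INR a * tau) (INR b * h)) <= eta0).
  { intros a b [Hab1 Hab2]. apply (grid_approx h eta0 (t0 + r0) d1); auto. apply Rabs_le_inv in Hab1. fold tau. lra. }
  assert (NN : forall a b, 0 <= INR a * tau /\ 0 <= INR b * h).
  { intros; split; apply Rmult_le_pos; try apply pos_INR; lra. }
  assert (Gbar : m00 - Kl * (tau + h) - eta0 - ((Rabs p1 + 2 * eps) * tau + (Rabs p2 + 2 * eps) * h) <= G nb jb).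
  { unfold G. pose proof (GA nb jb Hbar) as Q0. destruct (NN nb jb) as [Q1 Q2].
    pose proof (m_lip (INR nb * tau) (INR jb * h) t0 rho0 Q1 Q2 ltac:(lra) ltac:(lra)) as Q3.
    rewrite (Rabs_left1 (INR nb * tau - t0)), (Rabs_left1 (INR jb * h - rho0)) in Q3 by lra.
    assert (Hps : psi (INR nb * tau) (INR jb * h) <= (Rabs p1 + 2 * eps) * tau + (Rabs p2 + 2 * eps) * h).
    { unfold psi. rewrite (Rabs_left1 (INR nb * tau - t0)), (Rabs_left1 (INR jb * h - rho0)) by lra.
      pose proof (Rle_abs (p1 * (INR nb * tau - t0))) as Q4. pose proof (Rle_abs (p2 * (INR jb * h - rho0))) as Q5.
      rewrite Rabs_mult, (Rabs_left1 (INR nb * tau - t0)) in Q4 by lra.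
      rewrite Rabs_mult, (Rabs_left1 (INR jb * h - rho0)) in Q5 by lra.
      pose proof (Rabs_pos p1). pose proof (Rabs_pos p2).
      assert (Rabs p1 * - (INR nb * tau - t0) <= Rabs p1 * tau) by (apply Rmult_le_compat_l; lra).
      assert (Rabs p2 * - (INR jb * h - rho0) <= Rabs p2 * h) by (apply Rmult_le_compat_l; lra).
      nra. }
    pose proof (Rle_abs (- (mlim (INR nb * tau) (INR jb * h) - mlim t0 rho0))) as Q6. rewrite Rabs_Ropp in Q6.
    pose proof (Rle_abs (- (MM h nb jb - mlim (INR nb * tau) (INR jb * h)))) as Q7. rewrite Rabs_Ropp in Q7.
    unfold m00. nra. }
  set (tx := INR n * tau) in *. set (rx := INR j * h) in *.
  set (dh := Rabs (tx - t0) + Rabs (rx - rho0)).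
  assert (Hdh0 : 0 <= dh) by (unfold dh; pose proof (Rabs_pos (tx - t0)); pose proof (Rabs_pos (rx - rho0)); lra).
  set (A := MM h n j).
  assert (GAx : Rabs (A - mlim tx rx) <= eta0) by (apply GA; auto).
  assert (Gup : G n j <= m00 - eps * dh + eta0).
  { unfold G. fold tx rx A. destruct Hin as [Hi1 Hi2]. pose proof (Loc tx rx Hi1 Hi2).
    pose proof (Rle_abs (A - mlim tx rx)). unfold psi, dh. lra. }
  pose proof (Hmax nb jb (le_n _) (le_n _) Hbar) as Mb.
  assert (Hdh : eps * dh <= targ).
  { assert (Kl * (tau + h) + ((Rabs p1 + 2 * eps) * tau + (Rabs p2 + 2 * eps) * h) = h * Cp) by (unfold tau, Cp; ring).
    unfold eta0 in *. lra. }
  assert (Hdh2 : dh <= r0 / 4).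
  { apply Rmult_le_reg_l with eps; auto. lra. }
  assert (Htx : Rabs (tx - t0) <= r0 / 4) by (unfold dh in Hdh2; pose proof (Rabs_pos (rx - rho0)); lra).
  assert (Hrx : Rabs (rx - rho0) <= r0 / 4) by (unfold dh in Hdh2; pose proof (Rabs_pos (tx - t0)); lra).
  apply Rabs_le_inv in Htx. apply Rabs_le_inv in Hrx.
  destruct n as [|n1].
  { exfalso. unfold tx in Htx. simpl in Htx. lra. }
  destruct j as [|j1].
  { exfalso. unfold rx in Hrx. simpl in Hrx. lra. }
  assert (Etx : INR n1 * tau = tx - tau) by (unfold tx; rewrite S_INR; ring).
  assert (Erx : INR j1 * h = rx - h) by (unfold rx; rewrite S_INR; ring).
  assert (In1 : inb n1 (S j1)).
  { split; [rewrite Etx|fold rx]; apply Rabs_le; lra. }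
  assert (In2 : inb n1 j1).
  { split; [rewrite Etx|rewrite Erx]; apply Rabs_le; lra. }
  pose proof (Hmax n1 (S j1) ltac:(lia) Hj In1) as M1.
  pose proof (Hmax n1 j1 ltac:(lia) ltac:(lia) In2) as M2.
  unfold G in M1, M2. rewrite Etx in M1, M2. rewrite Erx in M2. fold tx rx A in M1, M2.
  assert (P1 : psi (tx - tau) rx - psi tx rx <= - p1 * tau + 2 * eps * tau).
  { unfold psi. pose proof (abs_shift (tx - t0) tau). rewrite (Rabs_right tau) in H by lra.
    replace (tx - tau - t0) with (tx - t0 - tau) by ring. nra. }
  assert (P2 : psi (tx - tau) (rx - h) - psi tx rx <= - p1 * tau - p2 * h + 2 * eps * (tau + h)).
  { unfold psi. pose proof (abs_shift (tx - t0) tau). rewrite (Rabs_right tau) in H by lra.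
    pose proof (abs_shift (rx - rho0) h). rewrite (Rabs_right h) in H0 by lra.
    replace (tx - tau - t0) with (tx - t0 - tau) by ring. replace (rx - h - rho0) with (rx - rho0 - h) by ring. nra. }
  set (as_ := A - p1 * tau + 2 * eps * tau).
  set (bs := A - p1 * tau - p2 * h + 2 * eps * (tau + h)).
  assert (Ha1 : MM h n1 (S j1) <= as_) by (unfold as_; lra).
  assert (Hb1 : MM h n1 j1 <= bs) by (unfold bs; lra).
  pose proof (sub_step h n1 j1 as_ bs Hh Ha1 Hb1) as SS. fold A in SS.
  assert (E1 : (as_ - bs) / h = p2 - 2 * eps) by (unfold as_, bs; field; lra).
  assert (E2 : as_ - A = tau * (- p1 + 2 * eps)) by (unfold as_; ring).
  rewrite E1, E2 in SS. fold tau in SS.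
  assert (SS' : A * HH (p2 - 2 * eps) <= - p1 + 2 * eps).
  { apply Rmult_le_reg_l with tau; auto. replace (tau * (A * HH (p2 - 2 * eps))) with (A * (tau * HH (p2 - 2 * eps))) by ring. auto. }
  assert (HA : m00 - Kl * dh - eta0 <= A).
  { pose proof (m_lip tx rx t0 rho0 ltac:(unfold tx; apply Rmult_le_pos; [apply pos_INR|lra]) ltac:(unfold rx; apply Rmult_le_pos; [apply pos_INR|lra]) ltac:(lra) ltac:(lra)).
    fold dh in H. pose proof (Rle_abs (- (mlim tx rx - mlim t0 rho0))). rewrite Rabs_Ropp in H0.
    pose proof (Rle_abs (- (A - mlim tx rx))). rewrite Rabs_Ropp in H1. unfold m00. lra. }
  pose proof (final_comb m00 A (HH (p2 - 2 * eps)) LA Kl dh eta0 eps zeta (- p1 + 2 * eps)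
    (HH_nonneg _) (HH_le _) HLA ltac:(lra) He Hz Hdh0 ltac:(unfold eta0; lra) SS' HA ltac:(lra) ltac:(unfold eta0; lra)).
  lra.
Qed.

Lemma final_comb2 m A HHv LA' Kl' d eta0 eps zeta p :
  0 <= HHv -> HHv <= LA' -> 0 <= LA' -> 0 <= Kl' -> 0 < eps -> 0 < zeta -> 0 <= d -> 0 <= eta0 ->
  p <= A * HHv -> A <= m + Kl' * d + eta0 ->
  eps * d <= eps * zeta / (2 * (LA' * Kl' + 1)) -> eta0 <= zeta / (2 * (LA' + 1)) ->
  p - zeta <= m * HHv.
Proof.
  intros.
  assert (Hd : d <= zeta / (2 * (LA' * Kl' + 1))).
  { apply Rmult_le_reg_l with eps; auto. replace (eps * (zeta / (2 * (LA' * Kl' + 1)))) with (eps * zeta / (2 * (LA' * Kl' + 1))) by (field; nra). auto. }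
  assert (E1 : (A - m) * HHv <= (Kl' * d + eta0) * LA').
  { destruct (Rle_dec A m). - assert ((A - m) * HHv <= 0) by nra. assert (0 <= (Kl' * d + eta0) * LA') by (apply Rmult_le_pos; nra). lra.
    - apply Rmult_le_compat; nra. }
  assert (E2 : Kl' * d * LA' <= zeta / 2).
  { apply Rle_trans with (Kl' * (zeta / (2 * (LA' * Kl' + 1))) * LA').
    - apply Rmult_le_compat_r; auto. apply Rmult_le_compat_l; auto.
    - apply Rmult_le_reg_r with (2 * (LA' * Kl' + 1)); [nra|].
      replace (Kl' * (zeta / (2 * (LA' * Kl' + 1))) * LA' * (2 * (LA' * Kl' + 1))) with (zeta * (LA' * Kl')) by (field; nra).
      nra. }
  assert (E3 : eta0 * LA' <= zeta / 2).
  { apply Rle_trans with (zeta / (2 * (LA' + 1)) * LA'); [apply Rmult_le_compat_r; auto|].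
    apply Rmult_le_reg_r with (2 * (LA' + 1)); [nra|].
    replace (zeta / (2 * (LA' + 1)) * LA' * (2 * (LA' + 1))) with (zeta * LA') by (field; nra). nra. }
  nra.
Qed.

Lemma visc_super_core t0 rho0 p1 p2 eps zeta : 0 < t0 -> 0 < rho0 -> subdiff mlim t0 rho0 p1 p2 ->
  0 < eps -> 0 < zeta -> - (2 * eps + zeta) <= p1 + HH (p2 + 2 * eps) * mlim t0 rho0.
Proof.
  intros Ht0 Hr0 Hsd He Hz.
  pose proof c0_pos as Hc0. pose proof Kl_pos as HKl. pose proof LA_nonneg as HLA.
  destruct (Hsd eps He) as [dl [Hdl Hloc]].
  set (r0 := Rmin (dl/4) (Rmin (t0/2) (rho0/2))).
  assert (Hr0a : r0 <= dl/4) by apply Rmin_l.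
  assert (Hr0b : r0 <= t0/2) by (eapply Rle_trans; [apply Rmin_r|apply Rmin_l]).
  assert (Hr0c : r0 <= rho0/2) by (eapply Rle_trans; [apply Rmin_r|apply Rmin_r]).
  assert (Hr00 : 0 < r0) by (unfold r0; repeat apply Rmin_glb_lt; lra).
  set (m00 := mlim t0 rho0).
  assert (Loc : forall t rho, Rabs (t - t0) <= r0 -> Rabs (rho - rho0) <= r0 ->
    m00 + p1 * (t - t0) + p2 * (rho - rho0) - eps * (Rabs (t - t0) + Rabs (rho - rho0)) <= mlim t rho).
  { intros t rho H1 H2.
    assert (Rabs (t - t0) + Rabs (rho - rho0) <= 2 * r0) by lra.
    apply Rabs_le_inv in H1. apply Rabs_le_inv in H2.
    pose proof (sqrt_le_l1 (t - t0) (rho - rho0)).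
    specialize (Hloc t rho ltac:(lra) ltac:(lra) ltac:(lra)).
    assert (eps * sqrt ((t - t0) ^ 2 + (rho - rho0) ^ 2) <= eps * (Rabs (t - t0) + Rabs (rho - rho0))) by (apply Rmult_le_compat_l; lra).
    unfold m00. lra. }
  set (psi := fun t rho => p1 * (t - t0) + p2 * (rho - rho0) - 2 * eps * (Rabs (t - t0) + Rabs (rho - rho0))).
  set (targ := Rmin (eps * r0 / 4) (Rmin (eps * zeta / (2 * (LA * Kl + 1))) (zeta / (2 * (LA + 1))))).
  assert (Tg1 : targ <= eps * r0 / 4) by apply Rmin_l.
  assert (Tg2 : targ <= eps * zeta / (2 * (LA * Kl + 1))) by (eapply Rle_trans; [apply Rmin_r|apply Rmin_l]).
  assert (Tg3 : targ <= zeta / (2 * (LA + 1))) by (eapply Rle_trans; [apply Rmin_r|apply Rmin_r]).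
  assert (Tg : 0 < targ).
  { unfold targ. repeat apply Rmin_glb_lt; apply Rmult_lt_0_compat; try nra; apply Rinv_0_lt_compat; nra. }
  set (eta0 := targ / 4).
  destruct (m_approx eta0 (t0 + r0) ltac:(unfold eta0; lra) ltac:(lra)) as [d1 [Hd1 Hap]].
  set (Cp := Kl * (c0 + 1) + (Rabs p1 + 2 * eps) * c0 + Rabs p2 + 2 * eps).
  assert (HCp : 0 <= Cp) by (unfold Cp; pose proof (Rabs_pos p1); pose proof (Rabs_pos p2); nra).
  destruct (choose_h d1 r0 Cp targ Hd1 Hr00 HCp Tg) as [h [Hh [Hhd [Htau [Hhr Hhc]]]]].
  set (tau := c0 * h) in *.
  assert (Htau0 : 0 < tau) by (unfold tau; nra).
  set (nb := fl (t0 / tau)). set (jb := fl (rho0 / h)).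
  pose proof (fl_cell tau Htau0 t0 ltac:(lra)) as [C1 C2]. fold nb in C1, C2. rewrite S_INR in C2.
  pose proof (fl_cell h Hh rho0 ltac:(lra)) as [C3 C4]. fold jb in C3, C4. rewrite S_INR in C4.
  set (inb := fun n j => Rabs (INR n * tau - t0) <= r0 /\ Rabs (INR j * h - rho0) <= r0).
  assert (dec : forall n j, {inb n j} + {~ inb n j}).
  { intros n j. unfold inb. destruct (Rle_dec (Rabs (INR n * tau - t0)) r0); [|right; tauto].
    destruct (Rle_dec (Rabs (INR j * h - rho0)) r0); [left; auto|right; tauto]. }
  set (G := fun n j => psi (INR n * tau) (INR j * h) - MM h n j).
  assert (Hbar : inb nb jb).
  { split; apply Rabs_le; lra. }
  destruct (box_max G inb dec nb jb Hbar) as [n [j [Hn [Hj [Hin Hmax]]]]].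
  assert (GA : forall a b, inb a b -> Rabs (MM h a b - mlim (INR a * tau) (INR b * h)) <= eta0).
  { intros a b [Hab1 Hab2]. apply (grid_approx h eta0 (t0 + r0) d1); auto. apply Rabs_le_inv in Hab1. fold tau. lra. }
  assert (NN : forall a b, 0 <= INR a * tau /\ 0 <= INR b * h).
  { intros; split; apply Rmult_le_pos; try apply pos_INR; lra. }
  assert (Gbar : - m00 - Kl * (tau + h) - eta0 - ((Rabs p1 + 2 * eps) * tau + (Rabs p2 + 2 * eps) * h) <= G nb jb).
  { unfold G. pose proof (GA nb jb Hbar) as Q0. destruct (NN nb jb) as [Q1 Q2].
    pose proof (m_lip (INR nb * tau) (INR jb * h) t0 rho0 Q1 Q2 ltac:(lra) ltac:(lra)) as Q3.
    rewrite (Rabs_left1 (INR nb * tau - t0)), (Rabs_left1 (INR jb * h - rho0)) in Q3 by lra.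
    assert (Hps : - ((Rabs p1 + 2 * eps) * tau + (Rabs p2 + 2 * eps) * h) <= psi (INR nb * tau) (INR jb * h)).
    { unfold psi. rewrite (Rabs_left1 (INR nb * tau - t0)), (Rabs_left1 (INR jb * h - rho0)) by lra.
      pose proof (Rle_abs (- (p1 * (INR nb * tau - t0)))) as Q4. pose proof (Rle_abs (- (p2 * (INR jb * h - rho0)))) as Q5.
      rewrite Rabs_Ropp in Q4, Q5.
      rewrite Rabs_mult, (Rabs_left1 (INR nb * tau - t0)) in Q4 by lra.
      rewrite Rabs_mult, (Rabs_left1 (INR jb * h - rho0)) in Q5 by lra.
      pose proof (Rabs_pos p1). pose proof (Rabs_pos p2).
      assert (Rabs p1 * - (INR nb * tau - t0) <= Rabs p1 * tau) by (apply Rmult_le_compat_l; lra).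
      assert (Rabs p2 * - (INR jb * h - rho0) <= Rabs p2 * h) by (apply Rmult_le_compat_l; lra).
      nra. }
    pose proof (Rle_abs (mlim (INR nb * tau) (INR jb * h) - mlim t0 rho0)) as Q6.
    pose proof (Rle_abs (MM h nb jb - mlim (INR nb * tau) (INR jb * h))) as Q7.
    unfold m00. nra. }
  set (tx := INR n * tau) in *. set (rx := INR j * h) in *.
  set (dh := Rabs (tx - t0) + Rabs (rx - rho0)).
  assert (Hdh0 : 0 <= dh) by (unfold dh; pose proof (Rabs_pos (tx - t0)); pose proof (Rabs_pos (rx - rho0)); lra).
  set (A := MM h n j).
  assert (GAx : Rabs (A - mlim tx rx) <= eta0) by (apply GA; auto).
  assert (Gup : G n j <= - m00 - eps * dh + eta0).
  { unfold G. fold tx rx A. destruct Hin as [Hi1 Hi2]. pose proof (Loc tx rx Hi1 Hi2).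
    pose proof (Rle_abs (- (A - mlim tx rx))). rewrite Rabs_Ropp in H0. unfold psi, dh. lra. }
  pose proof (Hmax nb jb (le_n _) (le_n _) Hbar) as Mb.
  assert (Hdh : eps * dh <= targ).
  { assert (Kl * (tau + h) + ((Rabs p1 + 2 * eps) * tau + (Rabs p2 + 2 * eps) * h) = h * Cp) by (unfold tau, Cp; ring).
    unfold eta0 in *. lra. }
  assert (Hdh2 : dh <= r0 / 4).
  { apply Rmult_le_reg_l with eps; auto. lra. }
  assert (Htx : Rabs (tx - t0) <= r0 / 4) by (unfold dh in Hdh2; pose proof (Rabs_pos (rx - rho0)); lra).
  assert (Hrx : Rabs (rx - rho0) <= r0 / 4) by (unfold dh in Hdh2; pose proof (Rabs_pos (tx - t0)); lra).
  apply Rabs_le_inv in Htx. apply Rabs_le_inv in Hrx.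
  destruct n as [|n1].
  { exfalso. unfold tx in Htx. simpl in Htx. lra. }
  destruct j as [|j1].
  { exfalso. unfold rx in Hrx. simpl in Hrx. lra. }
  assert (Etx : INR n1 * tau = tx - tau) by (unfold tx; rewrite S_INR; ring).
  assert (Erx : INR j1 * h = rx - h) by (unfold rx; rewrite S_INR; ring).
  assert (In1 : inb n1 (S j1)).
  { split; [rewrite Etx|fold rx]; apply Rabs_le; lra. }
  assert (In2 : inb n1 j1).
  { split; [rewrite Etx|rewrite Erx]; apply Rabs_le; lra. }
  pose proof (Hmax n1 (S j1) ltac:(lia) Hj In1) as M1.
  pose proof (Hmax n1 j1 ltac:(lia) ltac:(lia) In2) as M2.
  unfold G in M1, M2. rewrite Etx in M1, M2. rewrite Erx in M2. fold tx rx A in M1, M2.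
  assert (P1 : - p1 * tau - 2 * eps * tau <= psi (tx - tau) rx - psi tx rx).
  { unfold psi. pose proof (abs_shift (tx - t0) tau). rewrite (Rabs_right tau) in H by lra.
    replace (tx - tau - t0) with (tx - t0 - tau) by ring. nra. }
  assert (P2 : - p1 * tau - p2 * h - 2 * eps * (tau + h) <= psi (tx - tau) (rx - h) - psi tx rx).
  { unfold psi. pose proof (abs_shift (tx - t0) tau). rewrite (Rabs_right tau) in H by lra.
    pose proof (abs_shift (rx - rho0) h). rewrite (Rabs_right h) in H0 by lra.
    replace (tx - tau - t0) with (tx - t0 - tau) by ring. replace (rx - h - rho0) with (rx - rho0 - h) by ring. nra. }
  set (as_ := A - p1 * tau - 2 * eps * tau).
  set (bs := A - p1 * tau - p2 * h - 2 * eps * (tau + h)).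
  assert (Ha1 : as_ <= MM h n1 (S j1)) by (unfold as_; lra).
  assert (Hb1 : bs <= MM h n1 j1) by (unfold bs; lra).
  pose proof (super_step h n1 j1 as_ bs Hh Ha1 Hb1) as SS. fold A in SS.
  assert (E1 : (as_ - bs) / h = p2 + 2 * eps) by (unfold as_, bs; field; lra).
  assert (E2 : as_ - A = tau * (- p1 - 2 * eps)) by (unfold as_; ring).
  rewrite E1, E2 in SS. fold tau in SS.
  assert (SS' : - p1 - 2 * eps <= A * HH (p2 + 2 * eps)).
  { apply Rmult_le_reg_l with tau; auto. replace (tau * (A * HH (p2 + 2 * eps))) with (A * (tau * HH (p2 + 2 * eps))) by ring. auto. }
  assert (HA : A <= m00 + Kl * dh + eta0).
  { pose proof (m_lip tx rx t0 rho0 ltac:(unfold tx; apply Rmult_le_pos; [apply pos_INR|lra]) ltac:(unfold rx; apply Rmult_le_pos; [apply pos_INR|lra]) ltac:(lra) ltac:(lra)).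
    fold dh in H. pose proof (Rle_abs (mlim tx rx - mlim t0 rho0)).
    pose proof (Rle_abs (A - mlim tx rx)). unfold m00. lra. }
  pose proof (final_comb2 m00 A (HH (p2 + 2 * eps)) LA Kl dh eta0 eps zeta (- p1 - 2 * eps)
    (HH_nonneg _) (HH_le _) HLA ltac:(lra) He Hz Hdh0 ltac:(unfold eta0; lra) SS' HA ltac:(lra) ltac:(unfold eta0; lra)).
  lra.
Qed.


Lemma visc_sub_prop t0 rho0 p1 p2 : 0 < t0 -> 0 < rho0 -> superdiff mlim t0 rho0 p1 p2 ->
  p1 + rpow (Rmax p2 0) alpha * mlim t0 rho0 <= 0.
Proof.
  intros Ht Hr Hs. pose proof (superdiff_p2 t0 rho0 p1 p2 Ht Hr Hs) as Hp2.
  rewrite <- (Hfun_eq alpha Lm Lm_pos p2 Hp2). fold HH.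
  pose proof (m_range t0 rho0 ltac:(lra) ltac:(lra)) as Rm. pose proof Lp_pos.
  set (C := 3 + 2 * (alpha * Lp) * Sm).
  assert (HC : 0 < C) by (unfold C; assert (0 < alpha * Lp) by nra; nra).
  apply le_eps. intros e He.
  set (eps := e / C). assert (Heps : 0 < eps) by (unfold eps; apply Rmult_lt_0_compat; [lra|apply Rinv_0_lt_compat; lra]).
  pose proof (visc_sub_core t0 rho0 p1 p2 eps eps Ht Hr Hs Heps Heps).
  pose proof (HH_lip (p2 - 2 * eps) p2 ltac:(lra)) as [L1 L2].
  replace (p2 - (p2 - 2 * eps)) with (2 * eps) in L2 by ring.
  assert ((HH p2 - HH (p2 - 2 * eps)) * mlim t0 rho0 <= alpha * Lp * (2 * eps) * Sm) by (apply Rmult_le_compat; lra).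
  assert (e = eps * C) by (unfold eps; field; lra).
  unfold C in H2. lra.
Qed.

Lemma visc_super_prop t0 rho0 p1 p2 : 0 < t0 -> 0 < rho0 -> subdiff mlim t0 rho0 p1 p2 ->
  p1 + rpow (Rmax p2 0) alpha * mlim t0 rho0 >= 0.
Proof.
  intros Ht Hr Hs. pose proof (subdiff_q2 t0 rho0 p1 p2 Ht Hr Hs) as Hp2.
  rewrite <- (Hfun_eq alpha Lm Lm_pos p2 Hp2). fold HH.
  pose proof (m_range t0 rho0 ltac:(lra) ltac:(lra)) as Rm. pose proof Lp_pos.
  set (C := 3 + 2 * (alpha * Lp) * Sm).
  assert (HC : 0 < C) by (unfold C; assert (0 < alpha * Lp) by nra; nra).
  apply Rle_ge. apply Ropp_le_cancel. rewrite Ropp_0. apply le_eps. intros e He.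
  set (eps := e / C). assert (Heps : 0 < eps) by (unfold eps; apply Rmult_lt_0_compat; [lra|apply Rinv_0_lt_compat; lra]).
  pose proof (visc_super_core t0 rho0 p1 p2 eps eps Ht Hr Hs Heps Heps).
  pose proof (HH_lip p2 (p2 + 2 * eps) ltac:(lra)) as [L1 L2].
  replace (p2 + 2 * eps - p2) with (2 * eps) in L2 by ring.
  assert ((HH (p2 + 2 * eps) - HH p2) * mlim t0 rho0 <= alpha * Lp * (2 * eps) * Sm) by (apply Rmult_le_compat; lra).
  assert (e = eps * C) by (unfold eps; field; lra).
  unfold C in H2. lra.
Qed.

Lemma m_cont : cont_quadrant mlim.
Proof.
  intros t rho Ht Hr e He. pose proof Kl_pos.
  exists (e / (2 * Kl)). split; [apply Rmult_lt_0_compat; [lra|apply Rinv_0_lt_compat; lra]|].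
  intros s y Hs Hy H1 H2. rewrite Rabs_minus_sym.
  pose proof (m_lip t rho s y Ht Hr Hs Hy). rewrite (Rabs_minus_sym t), (Rabs_minus_sym rho) in H0.
  assert (Kl * (Rabs (s - t) + Rabs (y - rho)) < Kl * (2 * (e / (2 * Kl)))) by (apply Rmult_lt_compat_l; lra).
  replace (Kl * (2 * (e / (2 * Kl)))) with e in H3 by (field; lra). lra.
Qed.

Lemma main_sec :
  (exists K, forall h t rho t' rho', 0 < h -> 0 <= t -> 0 <= rho -> 0 <= t' -> 0 <= rho' ->
     Rabs (mh m0 alpha Lm Sm diag h t rho - mh m0 alpha Lm Sm diag h t' rho')
       <= K * (Rabs (t - t') + Rabs (rho - rho'))) /\
  (exists m : R -> R -> R,
     visc_sol alpha m0 m /\ bounded_quadrant m /\ unif_cont_quadrant m /\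
     (forall T P, 0 < T -> 0 < P -> forall eps, 0 < eps -> exists delta, 0 < delta /\
        forall h t rho, 0 < h < delta -> 0 <= t <= T -> 0 <= rho <= P ->
          Rabs (mh m0 alpha Lm Sm diag h t rho - m t rho) < eps) /\
     (forall t, 0 <= t ->
        is_lub (fun v => exists rho, 0 <= rho /\ v = Rabs (m t rho)) Sm /\
        (forall eps, 0 < eps -> exists R0, forall rho, R0 <= rho -> Rabs (m t rho - Sm) < eps) /\
        (forall rho rho', 0 <= rho -> 0 <= rho' -> Rabs (m t rho - m t rho') <= Lm * Rabs (rho - rho')))).
Proof.
  split.
  { exists Kl. intros. apply mh_lip; auto. }
  exists mlim. split; [|split; [|split; [|split]]].
  - split; split; [apply m_cont| |apply m_cont|].
    + split; [exact visc_sub_prop|]. split.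
      * intros rho Hr. rewrite m_init; lra.
      * intros t Ht. rewrite m_bdry; lra.
    + split; [exact visc_super_prop|]. split.
      * intros rho Hr. rewrite m_init; lra.
      * intros t Ht. rewrite m_bdry; lra.
  - exists Sm. intros t rho Ht Hr. pose proof (m_range t rho Ht Hr). rewrite Rabs_right; lra.
  - intros e He. pose proof Kl_pos.
    exists (e / (2 * Kl)). split; [apply Rmult_lt_0_compat; [lra|apply Rinv_0_lt_compat; lra]|].
    intros t rho s y Ht Hr Hs Hy H1 H2.
    pose proof (m_lip s y t rho Hs Hy Ht Hr).
    assert (Kl * (Rabs (s - t) + Rabs (y - rho)) < Kl * (2 * (e / (2 * Kl)))) by (apply Rmult_lt_compat_l; lra).
    replace (Kl * (2 * (e / (2 * Kl)))) with e in H3 by (field; lra). lra.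
  - intros T P HT HP e He. destruct (m_approx (e/2) T ltac:(lra) ltac:(lra)) as [d [Hd Hap]].
    exists d. split; auto. intros h t rho Hh Ht Hr. pose proof (Hap h t rho Hh Ht ltac:(lra)). unfold mhh in H. lra.
  - intros t Ht. pose proof c0_pos.
    assert (Htc : 0 <= t / c0) by (apply Rmult_le_pos; [lra|left; apply Rinv_0_lt_compat; lra]).
    split; [|split].
    + split.
      * intros v [rho [Hr ->]]. pose proof (m_range t rho Ht Hr). rewrite Rabs_right; lra.
      * intros b Hb. apply le_eps. intros e He.
        destruct (m0_to_S e He) as [X [HX HXs]].
        set (rho := X + t / c0 + 1).
        pose proof (m_lower t rho Ht ltac:(unfold rho; lra)).
        pose proof (HXs (rho - t / c0 - 1) ltac:(unfold rho; lra)).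
        pose proof (m_range t rho Ht ltac:(unfold rho; lra)).
        assert (Rabs (mlim t rho) <= b) by (apply Hb; exists rho; split; [unfold rho; lra|auto]).
        rewrite Rabs_right in H3 by lra. lra.
    + intros e He. destruct (m0_to_S e He) as [X [HX HXs]].
      exists (X + t / c0 + 1). intros rho Hr.
      pose proof (m_lower t rho Ht ltac:(lra)).
      pose proof (HXs (rho - t / c0 - 1) ltac:(lra)).
      pose proof (m_range t rho Ht ltac:(lra)).
      rewrite Rabs_left1 by lra. lra.
    + intros rho rho' Hr Hr'. apply m_lip_r; auto.
Qed.

End Main.

Theorem mainTheorem12 (alpha : R) (m0 : R -> R) (Lm Sm : R) (diag : bool) :
  1 <= alpha ->
  (forall x, 0 <= x -> 0 <= m0 x) ->
  (forall x y, 0 <= x -> x <= y -> m0 x <= m0 y) ->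
  m0 0 = 0 ->
  (* Sm = ||m0||_oo *)
  is_lub (fun v => exists x, 0 <= x /\ v = Rabs (m0 x)) Sm ->
  (* Lm = ||(m0)_rho||_oo, the best Lipschitz constant of m0 *)
  is_lub (fun q => exists x y, 0 <= x /\ x < y /\ q = Rabs (m0 y - m0 x) / (y - x)) Lm ->
  0 < Sm ->
  (* uniform Lipschitz continuity of the family {m^h} *)
  (exists K, forall h t rho t' rho', 0 < h -> 0 <= t -> 0 <= rho -> 0 <= t' -> 0 <= rho' ->
     Rabs (mh m0 alpha Lm Sm diag h t rho - mh m0 alpha Lm Sm diag h t' rho')
       <= K * (Rabs (t - t') + Rabs (rho - rho'))) /\
  (exists m : R -> R -> R,
     visc_sol alpha m0 m /\ bounded_quadrant m /\ unif_cont_quadrant m /\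
     (* uniform convergence on compacts *)
     (forall T P, 0 < T -> 0 < P -> forall eps, 0 < eps -> exists delta, 0 < delta /\
        forall h t rho, 0 < h < delta -> 0 <= t <= T -> 0 <= rho <= P ->
          Rabs (mh m0 alpha Lm Sm diag h t rho - m t rho) < eps) /\
     (forall t, 0 <= t ->
        is_lub (fun v => exists rho, 0 <= rho /\ v = Rabs (m t rho)) Sm /\
        (forall eps, 0 < eps -> exists R0, forall rho, R0 <= rho -> Rabs (m t rho - Sm) < eps) /\
        (forall rho rho', 0 <= rho -> 0 <= rho' -> Rabs (m t rho - m t rho') <= Lm * Rabs (rho - rho')))).
Proof.
  intros H1 H2 H3 H4 H5 H6 H7.
  exact (main_sec alpha m0 Lm Sm diag H1 H2 H3 H4 H5 H6 H7).
Qed.
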